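(* Fix $p\in[1,\infty)$, $q\in[1,\infty]$, integers $k\ge0$, $m_1\ge1$, $d_1,\dots,d_k\ge1$, and $c,c_o>0$; let $\mathbf d=(m_1,d_1,\dots,d_k,1)$ and $\beta=[\frac1{p^*}-\frac1q]_+$. Then for every set $S=\{x_1,\dots,x_n\}\subseteq[-1,1]^{m_1}$: (a) if $p\in(1,2]$, $$\widehat{\mathfrak{R}}_S\big(\mathcal{N}^{k,\mathbf d}_{p,q,c,c_o}\big)\le c_o\sqrt{\tfrac{(k+1)\log16}{n}}\sum_{i=1}^{k+1}c^{k-i+1}\prod_{l=i}^k d_l^{\beta}+\frac{c_oc^k}{\sqrt n}\prod_{i=1}^kd_i^{\beta}\,m_1^{1/p^*}\Big[\min\big(\sqrt{p^*-1},\sqrt{2\log(2m_1)}\big)+\sqrt{(k+1)\log16}\Big];$$ (b) if $p=1$ or $p\in(2,\infty)$, $$\widehat{\mathfrak{R}}_S\big(\mathcal{N}^{k,\mathbf d}_{p,q,c,c_o}\big)\le c_o\sqrt{\tfrac{(k+1)\log16}{n}}\sum_{i=1}^{k+1}c^{k-i+1}\prod_{l=i}^k d_l^{\beta}+\frac{c_oc^k}{\sqrt n}\prod_{i=1}^kd_i^{\beta}\,m_1^{1/p^*}\Big(\sqrt{2\log(2m_1)}+\sqrt{(k+1)\log16}\Big).$$ (Empty products equal $1$.)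
   Context: $p^*\in(1,\infty]$ is defined by $1/p+1/p^*=1$ ($p^*=\infty$, $1/p^*=0$ when $p=1$); $[x]_+=\max(x,0)$. $\sigma(u)=\max(u,0)$, applied coordinatewise. For a real $s_1\times s_2$ matrix $A=(a_{ij})$: $\|A\|_{p,q}=\big(\sum_{j=1}^{s_2}(\sum_{i=1}^{s_1}|a_{ij}|^p)^{q/p}\big)^{1/q}$ for $q<\infty$, and $\|A\|_{p,\infty}=\max_j(\sum_{i}|a_{ij}|^p)^{1/p}$. An affine map $T:\mathbb{R}^{a}\to\mathbb{R}^{b}$, $T(u)=W^Tu+B$, is identified with $\tilde V\in\mathbb{R}^{(a+1)\times b}$ whose first row is $B^T$ and remaining rows form $W$, so $T(u)=\tilde V^T(1,u^T)^T$; $\|T\|_{p,q}:=\|\tilde V\|_{p,q}$. For $k\ge0$, width vector $\mathbf d=(d_0,\dots,d_{k+1})$ and $c,c_o>0$, $\mathcal{N}^{k,\mathbf d}_{p,q,c,c_o}$ is the set of all $f=T_{k+1}\circ\sigma\circ T_k\circ\cdots\circ\sigma\circ T_1:\mathbb{R}^{d_0}\to\mathbb{R}^{d_{k+1}}$ with affine $T_i:\mathbb{R}^{d_{i-1}}\to\mathbb{R}^{d_i}$, $\|T_i\|_{p,q}=c$ for $i\le k$ and $\|T_{k+1}\|_{p,q}\le c_o$. The empirical Rademacher complexity is $\widehat{\mathfrak{R}}_S(\mathcal F)=\mathbb{E}_\epsilon\big[\sup_{f\in\mathcal F}\frac1n\sum_{i=1}^n\epsilon_i f(x_i)\big]$ with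 $\epsilon_i$ i.i.d. uniform on $\{-1,+1\}$. *)

(* Defs.v *)
From Stdlib Require Import Reals Lra Lia List ClassicalEpsilon.
Open Scope R_scope.

Fixpoint rsum (n : nat) (f : nat -> R) : R :=
  match n with O => 0 | S n' => rsum n' f + f n' end.
Fixpoint rprod (n : nat) (f : nat -> R) : R :=
  match n with O => 1 | S n' => rprod n' f * f n' end.
Fixpoint rmaxl (n : nat) (f : nat -> R) : R :=
  match n with O => 0 | S n' => Rmax (rmaxl n' f) (f n') end.

(* real power x^y for x > 0; set to 0 for x <= 0 (only used on
   nonnegative bases, where 0^y = 0 for y > 0) *)
Definition rpow (x y : R) : R :=
  if Rle_dec x 0 then 0 else Rpower x y.

(* q in [1, infinity]: None stands for q = infinity *)
Definition extR := option R.
Definition inv_ext (q : extR) : R :=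
  match q with Some q' => 1 / q' | None => 0 end.

Definition inv_pstar (p : R) : R := 1 - 1 / p.
Definition pstar (p : R) : R := p / (p - 1).

Definition pos_part (x : R) : R := Rmax x 0.
Definition relu (u : nat -> R) : nat -> R := fun i => Rmax (u i) 0.

(* A matrix is nat -> nat -> R; only entries (i,j) with i < s1, j < s2 matter. *)
Definition col_norm (p : R) (s1 : nat) (A : nat -> nat -> R) (j : nat) : R :=
  rpow (rsum s1 (fun i => rpow (Rabs (A i j)) p)) (1 / p).

Definition mat_norm (p : R) (q : extR) (s1 s2 : nat) (A : nat -> nat -> R) : R :=
  match q with
  | Some q' => rpow (rsum s2 (fun j => rpow (col_norm p s1 A j) q')) (1 / q')
  | None => rmaxl s2 (col_norm p s1 A)
  end.

(* affine map R^a -> R^b identified with V in R^{(a+1) x b}: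
   T(u)_j = V 0 j + sum_{i<a} V (i+1) j * u_i *)
Definition affine (a : nat) (V : nat -> nat -> R) (u : nat -> R) : nat -> R :=
  fun j => V 0%nat j + rsum a (fun i => V (S i) j * u i).

(* width vector d = (m1, dh 1, ..., dh k, 1) *)
Definition width (k m1 : nat) (dh : nat -> nat) (i : nat) : nat :=
  if Nat.eqb i 0 then m1 else if Nat.leb i k then dh i else 1%nat.

Fixpoint hidden (k m1 : nat) (dh : nat -> nat) (W : nat -> nat -> nat -> R)
  (x : nat -> R) (i : nat) : nat -> R :=
  match i with
  | O => x
  | S i' => relu (affine (width k m1 dh i') (W i) (hidden k m1 dh W x i'))
  end.

Definition net_out (k m1 : nat) (dh : nat -> nat) (W : nat -> nat -> nat -> R)
  (x : nat -> R) : R :=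
  affine (width k m1 dh k) (W (S k)) (hidden k m1 dh W x k) 0%nat.

Definition in_NN (p : R) (q : extR) (c co : R) (k m1 : nat) (dh : nat -> nat)
  (f : (nat -> R) -> R) : Prop :=
  exists W : nat -> nat -> nat -> R,
    (forall i, (1 <= i <= k)%nat ->
       mat_norm p q (S (width k m1 dh (i - 1))) (width k m1 dh i) (W i) = c) /\
    mat_norm p q (S (width k m1 dh k)) 1 (W (S k)) <= co /\
    (forall x, f x = net_out k m1 dh W x).

(* supremum of a set of reals (least upper bound when the set is nonempty
   and bounded above; 0 otherwise) *)
Definition Rsup (E : R -> Prop) : R :=
  match excluded_middle_informative (bound E /\ exists x, E x) with
  | left H => proj1_sig (completeness E (proj1 H) (proj2 H))
  | right _ => 0
  end.

Fixpoint sign_vectors (n : nat) : list (nat -> R) :=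
  match n with
  | O => (fun _ => 1) :: nil
  | S n' => flat_map (fun e =>
        (fun i => if Nat.eqb i n' then 1 else e i) ::
        (fun i => if Nat.eqb i n' then -1 else e i) :: nil) (sign_vectors n')
  end.

Definition lsum (l : list R) : R := fold_right Rplus 0 l.

Definition emp_rademacher (F : ((nat -> R) -> R) -> Prop) (n : nat)
  (x : nat -> nat -> R) : R :=
  / (2 ^ n) * lsum (map (fun eps =>
      Rsup (fun r => exists f, F f /\
              r = / INR n * rsum n (fun i => eps i * f (x i))))
    (sign_vectors n)).

(* Main.v *)
Require Import Defs.
From Stdlib Require Import Reals Lra Lia List ClassicalEpsilon.
From Stdlib Require Import FunctionalExtensionality PropExtensionality.
Open Scope R_scope.

Lemma rsum_ext n f g : (forall i, (i < n)%nat -> f i = g i) -> rsum n f = rsum n g.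
Proof. induction n; simpl; intros H; auto. rewrite IHn by (intros; apply H; lia). rewrite H by lia; auto. Qed.

Lemma rsum_le n f g : (forall i, (i < n)%nat -> f i <= g i) -> rsum n f <= rsum n g.
Proof. induction n; simpl; intros H; [lra|]. assert (f n <= g n) by (apply H; lia).
  assert (rsum n f <= rsum n g) by (apply IHn; intros; apply H; lia). lra. Qed.

Lemma rsum_nonneg n f : (forall i, (i < n)%nat -> 0 <= f i) -> 0 <= rsum n f.
Proof. intros H. replace 0 with (rsum n (fun _ => 0)). apply rsum_le; auto.
  induction n; simpl; auto. rewrite IHn; [lra|]. intros; apply H; lia. Qed.

Lemma rsum_zero n : rsum n (fun _ => 0) = 0.
Proof. induction n; simpl; auto. rewrite IHn; lra. Qed.

Lemma rsum_plus n f g : rsum n (fun i => f i + g i) = rsum n f + rsum n g.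
Proof. induction n; simpl; [lra|]. rewrite IHn; lra. Qed.

Lemma rsum_scal n a f : rsum n (fun i => a * f i) = a * rsum n f.
Proof. induction n; simpl; [lra|]. rewrite IHn; lra. Qed.

Lemma rsum_opp n f : rsum n (fun i => - f i) = - rsum n f.
Proof. induction n; simpl; [lra|]. rewrite IHn; lra. Qed.

Lemma rsum_shift n f : rsum (S n) f = f 0%nat + rsum n (fun i => f (S i)).
Proof. induction n; simpl in *; [lra|]. rewrite IHn; lra. Qed.

Lemma rsum_abs n f : Rabs (rsum n f) <= rsum n (fun i => Rabs (f i)).
Proof. induction n; simpl. rewrite Rabs_R0; lra.
  eapply Rle_trans; [apply Rabs_triang|]. lra. Qed.

Lemma rsum_term n f j : (forall i, (i < n)%nat -> 0 <= f i) -> (j < n)%nat -> f j <= rsum n f.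
Proof. induction n; intros H Hj; [lia|]. simpl.
  destruct (Nat.eq_dec j n). subst. assert (0 <= rsum n f) by (apply rsum_nonneg; intros; apply H; lia). lra.
  assert (f j <= rsum n f) by (apply IHn; [intros; apply H|]; lia). assert (0 <= f n) by (apply H; lia). lra. Qed.

Lemma rsum_swap n m (f : nat -> nat -> R) :
  rsum n (fun i => rsum m (fun j => f i j)) = rsum m (fun j => rsum n (fun i => f i j)).
Proof. induction n; simpl. rewrite rsum_zero; auto.
  rewrite IHn. rewrite <- rsum_plus. auto. Qed.

Lemma rsum_const n a : rsum n (fun _ => a) = INR n * a.
Proof. induction n; [simpl; lra|]. simpl rsum. rewrite IHn. rewrite S_INR. lra. Qed.

Lemma rpow_nonneg x a : 0 <= rpow x a.
Proof. unfold rpow. destruct (Rle_dec x 0); [lra|]. unfold Rpower. left; apply exp_pos. Qed.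

Lemma rpow_pos x a : 0 < x -> rpow x a = Rpower x a.
Proof. intros. unfold rpow. destruct (Rle_dec x 0); [lra|auto]. Qed.

Lemma rpow_gt0 x a : 0 < x -> 0 < rpow x a.
Proof. intros. rewrite rpow_pos by auto. unfold Rpower; apply exp_pos. Qed.

Lemma rpow_zero a : rpow 0 a = 0.
Proof. unfold rpow. destruct (Rle_dec 0 0); lra. Qed.

Lemma rpow_le0 x a : x <= 0 -> rpow x a = 0.
Proof. unfold rpow. destruct (Rle_dec x 0); lra. Qed.

Lemma rpow_1 x : 0 <= x -> rpow x 1 = x.
Proof. intros H. destruct (Req_dec x 0). subst; apply rpow_zero.
  rewrite rpow_pos by lra. apply Rpower_1; lra. Qed.

Lemma rpow_inv x p : 0 <= x -> 0 < p -> rpow (rpow x p) (1/p) = x.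
Proof. intros H Hp. destruct (Req_dec x 0). subst; rewrite !rpow_zero; auto.
  rewrite (rpow_pos x) by lra. rewrite rpow_pos by (unfold Rpower; apply exp_pos).
  rewrite Rpower_mult. replace (p * (1/p)) with 1 by (field; lra). apply Rpower_1; lra. Qed.

Lemma rpow_inv' x p : 0 <= x -> 0 < p -> rpow (rpow x (1/p)) p = x.
Proof. intros H Hp. destruct (Req_dec x 0). subst; rewrite !rpow_zero; auto.
  rewrite (rpow_pos x) by lra. rewrite rpow_pos by (unfold Rpower; apply exp_pos).
  rewrite Rpower_mult. replace (1/p * p) with 1 by (field; lra). apply Rpower_1; lra. Qed.

Lemma rpow_mult x y a : 0 <= x -> 0 <= y -> rpow (x*y) a = rpow x a * rpow y a.
Proof. intros Hx Hy. destruct (Req_dec x 0). subst. rewrite Rmult_0_l, !rpow_zero; lra.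
  destruct (Req_dec y 0). subst. rewrite Rmult_0_r, !rpow_zero; lra.
  rewrite !rpow_pos by nra. rewrite Rpower_mult_distr by lra. auto. Qed.

Lemma rpow_comp x a b : 0 <= x -> rpow (rpow x a) b = rpow x (a*b).
Proof. intros H. destruct (Req_dec x 0). subst; rewrite !rpow_zero; auto.
  rewrite (rpow_pos x) by lra. rewrite rpow_pos by (unfold Rpower; apply exp_pos).
  rewrite rpow_pos by lra. apply Rpower_mult. Qed.

Lemma rpow_le_base x y a : 0 <= a -> 0 <= x <= y -> rpow x a <= rpow y a.
Proof. intros Ha Hxy. destruct (Req_dec x 0). subst. rewrite rpow_zero; apply rpow_nonneg.
  rewrite !rpow_pos by lra. apply Rle_Rpower_l; lra. Qed.

Lemma rpow_lt_base x y a : 0 < a -> 0 <= x < y -> rpow x a < rpow y a.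
Proof. intros Ha Hxy. destruct (Req_dec x 0). subst. rewrite rpow_zero; apply rpow_gt0; lra.
  rewrite !rpow_pos by lra. apply Rlt_Rpower_l; lra. Qed.

Lemma rpow_le_base_inv x y a : 0 < a -> 0 <= x -> 0 <= y -> rpow x a <= rpow y a -> x <= y.
Proof. intros Ha Hx Hy H. destruct (Rle_dec x y); auto.
  assert (rpow y a < rpow x a) by (apply rpow_lt_base; lra). lra. Qed.

Lemma rpow_exp_le1 x a b : 0 <= x <= 1 -> 0 <= a <= b -> rpow x b <= rpow x a.
Proof. intros Hx Hab. destruct (Req_dec x 0). subst; rewrite !rpow_zero; lra.
  rewrite !rpow_pos by lra. unfold Rpower.
  assert (ln x <= 0). { destruct (Req_dec x 1). subst; rewrite ln_1; lra. left. rewrite <- ln_1. apply ln_increasing; lra. }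
  destruct (Req_dec (b * ln x) (a * ln x)) as [E|E]. rewrite E; lra.
  left. apply exp_increasing. nra. Qed.

Lemma Rabs_le_inv a b : Rabs a <= b -> - b <= a <= b.
Proof. intros H. unfold Rabs in H. destruct (Rcase_abs a); lra. Qed.

Lemma ln_le_sub1 z : 0 < z -> ln z <= z - 1.
Proof. intros Hz. assert (H := exp_ineq1_le (ln z)). rewrite exp_ln in H by auto. lra. Qed.

Lemma ln_le_rel x M : 0 < x -> 0 < M -> ln x <= ln M + x / M - 1.
Proof. intros Hx HM. assert (H := ln_le_sub1 (x/M)). 
  assert (0 < x / M) by (apply Rdiv_lt_0_compat; auto).
  specialize (H H0). unfold Rdiv in *. rewrite ln_mult in H by (auto; apply Rinv_0_lt_compat; auto).
  rewrite ln_Rinv in H by auto. lra. Qed.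

Lemma amgm2 x y a b : 0 <= x -> 0 <= y -> 0 <= a -> 0 <= b -> a + b = 1 ->
  rpow x a * rpow y b <= a * x + b * y.
Proof. intros Hx Hy Ha Hb Hab.
  destruct (Req_dec x 0). subst. rewrite rpow_zero. nra.
  destruct (Req_dec y 0). subst. rewrite rpow_zero. nra.
  rewrite !rpow_pos by lra. unfold Rpower. rewrite <- exp_plus.
  set (M := a * x + b * y). assert (HM : 0 < M) by (unfold M; destruct (Rle_dec x y); nra).
  assert (h1 := ln_le_rel x M ltac:(lra) HM). assert (h2 := ln_le_rel y M ltac:(lra) HM).
  assert (a * ln x + b * ln y <= ln M).
  { assert (a * ln x <= a * (ln M + x / M - 1)) by (apply Rmult_le_compat_l; auto).
    assert (b * ln y <= b * (ln M + y / M - 1)) by (apply Rmult_le_compat_l; auto).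
    assert (E : a * (x / M) + b * (y / M) = 1) by (unfold M in *; field; lra).
    assert (a * ln M + b * ln M = ln M) by (rewrite <- Rmult_plus_distr_r, Hab; lra).
    nra. }
  rewrite <- (exp_ln M) by auto. apply exp_le_compat || (destruct (Req_dec (a * ln x + b * ln y) (ln M)) as [E|E]; [rewrite E; lra| left; apply exp_increasing; lra]).
Qed.

Lemma amgm3 x y z a b c : 0 <= x -> 0 <= y -> 0 <= z -> 0 <= a -> 0 <= b -> 0 <= c -> a + b + c = 1 ->
  rpow x a * rpow y b * rpow z c <= a * x + b * y + c * z.
Proof. intros Hx Hy Hz Ha Hb Hc Habc.
  destruct (Req_dec x 0). subst. rewrite rpow_zero. assert (0 <= rpow y b) by apply rpow_nonneg. nra.
  destruct (Req_dec y 0). subst. rewrite rpow_zero. nra.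
  destruct (Req_dec z 0). subst. rewrite rpow_zero. nra.
  rewrite !rpow_pos by lra. unfold Rpower. rewrite <- !exp_plus.
  set (M := a * x + b * y + c * z). assert (HM : 0 < M) by (unfold M; destruct (Rle_dec x y); destruct (Rle_dec x z); destruct (Rle_dec y z); nra).
  assert (h1 := ln_le_rel x M ltac:(lra) HM). assert (h2 := ln_le_rel y M ltac:(lra) HM).
  assert (h3 := ln_le_rel z M ltac:(lra) HM).
  assert (a * ln x + b * ln y + c * ln z <= ln M).
  { assert (a * ln x <= a * (ln M + x / M - 1)) by (apply Rmult_le_compat_l; auto).
    assert (b * ln y <= b * (ln M + y / M - 1)) by (apply Rmult_le_compat_l; auto).
    assert (c * ln z <= c * (ln M + z / M - 1)) by (apply Rmult_le_compat_l; auto).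
    assert (E : a * (x / M) + b * (y / M) + c * (z / M) = 1) by (unfold M in *; field; lra).
    assert (a * ln M + b * ln M + c * ln M = ln M) by (rewrite <- !Rmult_plus_distr_r, Habc; lra).
    nra. }
  rewrite <- (exp_ln M) by auto.
  destruct (Req_dec (a * ln x + b * ln y + c * ln z) (ln M)) as [E|E]; [rewrite E; lra| left; apply exp_increasing; lra].
Qed.

Lemma rpow_one a : rpow 1 a = 1.
Proof. rewrite rpow_pos by lra. unfold Rpower. rewrite ln_1, Rmult_0_r, exp_0. auto. Qed.

Lemma rpow_exp0 x : 0 < x -> rpow x 0 = 1.
Proof. intros. rewrite rpow_pos by auto. apply Rpower_O; auto. Qed.

Lemma rpow_recip x a : 0 < x -> rpow (/ x) a * rpow x a = 1.
Proof. intros. rewrite <- rpow_mult by (try left; try apply Rinv_0_lt_compat; auto).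
  rewrite Rinv_l by lra. apply rpow_one. Qed.

Lemma rpow_abs_inv u p : 0 < p -> rpow (rpow (Rabs u) p) (1/p) = Rabs u.
Proof. intros. apply rpow_inv; auto. apply Rabs_pos. Qed.

Lemma rpow_le1 x p : 0 < p -> 0 <= x -> rpow x p <= 1 -> x <= 1.
Proof. intros Hp Hx H. apply (rpow_le_base_inv x 1 p); auto; try lra. rewrite rpow_one; auto. Qed.

Lemma powmean p d u : 1 <= p -> (1 <= d)%nat ->
  rsum d (fun j => rpow (Rabs (u j)) p) <= 1 ->
  rsum d (fun j => Rabs (u j)) <= rpow (INR d) (1 - 1/p).
Proof. intros Hp Hd Hu.
  assert (HD : 0 < INR d) by (apply lt_0_INR; lia).
  set (b := 1 - 1/p). assert (Hb : 0 <= b) by (unfold b; apply Rle_0_minus || idtac;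
    assert (1/p <= 1) by (apply Rmult_le_reg_r with p; [lra| unfold Rdiv; rewrite Rmult_assoc, Rinv_l; lra]); lra).
  assert (Ha : 0 <= 1/p) by (apply Rlt_le, Rdiv_lt_0_compat; lra).
  set (r := rpow (/ INR d) b). assert (Hr : 0 < r) by (apply rpow_gt0, Rinv_0_lt_compat; auto).
  assert (H1 : rsum d (fun j => Rabs (u j) * r) <= 1).
  { apply Rle_trans with (rsum d (fun j => 1/p * rpow (Rabs (u j)) p + b * / INR d)).
    - apply rsum_le. intros j Hj. rewrite <- (rpow_abs_inv (u j) p) at 1 by lra.
      apply amgm2; try apply rpow_nonneg; try lra. left; apply Rinv_0_lt_compat; auto. unfold b; lra.
    - rewrite rsum_plus, rsum_scal, rsum_const.
      replace (INR d * (b * / INR d)) with b by (field; lra). unfold b.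
      assert (1/p * rsum d (fun j => rpow (Rabs (u j)) p) <= 1/p * 1) by (apply Rmult_le_compat_l; auto). lra. }
  assert (E : rsum d (fun j => Rabs (u j) * r) = r * rsum d (fun j => Rabs (u j))).
  { rewrite <- rsum_scal. apply rsum_ext; intros; lra. }
  rewrite E in H1. assert (Hrr := rpow_recip (INR d) b HD). fold r in Hrr.
  assert (0 <= rpow (INR d) b) by apply rpow_nonneg.
  assert (H2 : r * rsum d (fun j => Rabs (u j)) * rpow (INR d) b <= 1 * rpow (INR d) b) by (apply Rmult_le_compat_r; auto).
  replace (r * rsum d (fun j => Rabs (u j)) * rpow (INR d) b) with (rsum d (fun j => Rabs (u j)) * (r * rpow (INR d) b)) in H2 by ring.
  rewrite Hrr in H2. lra.
Qed.

Definition qok (q : extR) := match q with Some q' => 1 <= q' | None => True end.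

Definition colbound (q : extR) (d : nat) (N : nat -> R) (c : R) : Prop :=
  match q with
  | Some q' => rsum d (fun j => rpow (N j) q') <= rpow c q'
  | None => forall j, (j < d)%nat -> N j <= c
  end.

Lemma holder_beta p q d u N c : 1 <= p -> qok q -> (1 <= d)%nat -> 0 < c ->
  rsum d (fun j => rpow (Rabs (u j)) p) <= 1 ->
  (forall j, (j < d)%nat -> 0 <= N j) -> colbound q d N c ->
  rsum d (fun j => Rabs (u j) * N j) <= c * rpow (INR d) (pos_part (inv_pstar p - inv_ext q)).
Proof. intros Hp Hq Hd Hc Hu HN HB.
  assert (HD : 0 < INR d) by (apply lt_0_INR; lia).
  assert (Ha : 0 < 1/p) by (apply Rdiv_lt_0_compat; lra).
  assert (Ha1 : 1/p <= 1) by (apply Rmult_le_reg_r with p; [lra| unfold Rdiv; rewrite Rmult_assoc, Rinv_l; lra]).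
  destruct q as [q'|]; simpl in *.
  - assert (Hb : 0 < 1/q') by (apply Rdiv_lt_0_compat; lra).
    assert (Hb1 : 1/q' <= 1) by (apply Rmult_le_reg_r with q'; [lra| unfold Rdiv; rewrite Rmult_assoc, Rinv_l; lra]).
    set (y := fun j => N j / c).
    assert (Hy0 : forall j, (j < d)%nat -> 0 <= y j) by (intros; unfold y; apply Rmult_le_pos; [auto| left; apply Rinv_0_lt_compat; auto]).
    assert (Hy : rsum d (fun j => rpow (y j) q') <= 1).
    { unfold y. assert (E : rsum d (fun j => rpow (N j / c) q') = rpow (/c) q' * rsum d (fun j => rpow (N j) q')).
      { rewrite <- rsum_scal. apply rsum_ext. intros j Hj. unfold Rdiv. rewrite rpow_mult; [ring|auto|].
        left; apply Rinv_0_lt_compat; auto. }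
      rewrite E. assert (0 <= rpow (/c) q') by apply rpow_nonneg.
      apply Rle_trans with (rpow (/c) q' * rpow c q'). apply Rmult_le_compat_l; auto.
      rewrite rpow_recip; lra. }
    assert (Key : rsum d (fun j => Rabs (u j) * y j) <= rpow (INR d) (pos_part (1 - 1/p - 1/q'))).
    { unfold pos_part. destruct (Rle_dec 0 (1 - 1/p - 1/q')) as [Hr|Hr].
      + rewrite Rmax_left by lra. set (rho := 1 - 1/p - 1/q').
        set (r := rpow (/ INR d) rho). assert (Hr0 : 0 < r) by (apply rpow_gt0, Rinv_0_lt_compat; auto).
        assert (H1 : rsum d (fun j => Rabs (u j) * y j * r) <= 1).
        { apply Rle_trans with (rsum d (fun j => 1/p * rpow (Rabs (u j)) p + 1/q' * rpow (y j) q' + rho * / INR d)).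
          - apply rsum_le. intros j Hj. rewrite <- (rpow_abs_inv (u j) p) at 1 by lra.
            rewrite <- (rpow_inv (y j) q') at 1 by (auto; lra).
            apply amgm3; try apply rpow_nonneg; try lra. left; apply Rinv_0_lt_compat; auto. unfold rho; lra. unfold rho; lra.
          - rewrite !rsum_plus, !rsum_scal, rsum_const.
            rewrite Rinv_r by lra. rewrite Rmult_1_r. unfold rho.
            assert (1/p * rsum d (fun j => rpow (Rabs (u j)) p) <= 1/p * 1) by (apply Rmult_le_compat_l; lra).
            assert (1/q' * rsum d (fun j => rpow (y j) q') <= 1/q' * 1) by (apply Rmult_le_compat_l; lra). lra. }
        assert (E : rsum d (fun j => Rabs (u j) * y j * r) = r * rsum d (fun j => Rabs (u j) * y j)).
        { rewrite <- rsum_scal. apply rsum_ext; intros; lra. }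
        rewrite E in H1. assert (Hrr := rpow_recip (INR d) rho HD). fold r in Hrr.
        assert (0 <= rpow (INR d) rho) by apply rpow_nonneg.
        assert (H2 : r * rsum d (fun j => Rabs (u j) * y j) * rpow (INR d) rho <= 1 * rpow (INR d) rho) by (apply Rmult_le_compat_r; auto).
        replace (r * rsum d (fun j => Rabs (u j) * y j) * rpow (INR d) rho) with (rsum d (fun j => Rabs (u j) * y j) * (r * rpow (INR d) rho)) in H2 by ring.
        rewrite Hrr in H2. lra.
      + rewrite Rmax_right by lra. rewrite rpow_exp0 by auto.
        apply Rle_trans with (rsum d (fun j => 1/p * rpow (Rabs (u j)) p + (1 - 1/p) * rpow (y j) q')).
        * apply rsum_le. intros j Hj.
          assert (Hyj : rpow (y j) q' <= 1).
          { apply Rle_trans with (rsum d (fun j => rpow (y j) q')); auto.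
            apply (rsum_term d (fun j => rpow (y j) q')); auto. intros; apply rpow_nonneg. }
          assert (Hyj2 : y j <= rpow (rpow (y j) q') (1 - 1/p)).
          { rewrite <- (rpow_inv (y j) q') at 1 by (auto; lra). apply rpow_exp_le1.
            split; [apply rpow_nonneg|auto]. lra. }
          apply Rle_trans with (Rabs (u j) * rpow (rpow (y j) q') (1 - 1/p)).
          apply Rmult_le_compat_l; auto; apply Rabs_pos.
          rewrite <- (rpow_abs_inv (u j) p) at 1 by lra.
          apply amgm2; try apply rpow_nonneg; lra.
        * rewrite rsum_plus, !rsum_scal.
          assert (1/p * rsum d (fun j => rpow (Rabs (u j)) p) <= 1/p * 1) by (apply Rmult_le_compat_l; lra).
          assert ((1 - 1/p) * rsum d (fun j => rpow (y j) q') <= (1 - 1/p) * 1) by (apply Rmult_le_compat_l; lra). lra. }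
    unfold inv_pstar, inv_ext.
    assert (E : rsum d (fun j => Rabs (u j) * N j) = c * rsum d (fun j => Rabs (u j) * y j)).
    { rewrite <- rsum_scal. apply rsum_ext. intros; unfold y. field. lra. }
    rewrite E. apply Rmult_le_compat_l; lra.
  - unfold inv_pstar, inv_ext, pos_part. rewrite Rmax_left by lra. rewrite Rminus_0_r.
    apply Rle_trans with (rsum d (fun j => c * Rabs (u j))).
    apply rsum_le. intros. rewrite Rmult_comm. apply Rmult_le_compat_r. apply Rabs_pos. auto.
    rewrite rsum_scal. apply Rmult_le_compat_l; [lra|]. apply powmean; auto.
Qed.

Definition Ex (n : nat) (F : (nat -> R) -> R) : R :=
  / (2 ^ n) * lsum (map F (sign_vectors n)).
Definition upd (e : nat -> R) (n : nat) (a : R) : nat -> R :=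
  fun i => if Nat.eqb i n then a else e i.
Definition sgn (e : nat -> R) := forall i, e i = 1 \/ e i = -1.

Lemma Ex0 F : Ex 0 F = F (fun _ => 1).
Proof. unfold Ex. simpl. lra. Qed.

Lemma lsum_flat (F : (nat -> R) -> R) (g1 g2 : (nat -> R) -> (nat -> R)) l :
  lsum (map F (flat_map (fun e => g1 e :: g2 e :: nil) l)) = lsum (map (fun e => F (g1 e) + F (g2 e)) l).
Proof. induction l; simpl; auto. rewrite IHl. lra. Qed.

Lemma lsum_scal a (F : (nat -> R) -> R) l : lsum (map (fun e => a * F e) l) = a * lsum (map F l).
Proof. induction l; simpl; [lra|]. rewrite IHl; lra. Qed.

Lemma Ex_rec n F : Ex (S n) F = Ex n (fun e => (F (upd e n 1) + F (upd e n (-1))) / 2).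
Proof. unfold Ex. simpl sign_vectors. rewrite lsum_flat.
  unfold Rdiv. replace (map (fun e => (F (upd e n 1) + F (upd e n (-1))) * / 2) (sign_vectors n))
   with (map (fun e => / 2 * (F (upd e n 1) + F (upd e n (-1)))) (sign_vectors n)).
  rewrite lsum_scal. simpl pow. rewrite Rinv_mult. unfold upd. lra.
  apply map_ext; intros; lra. Qed.

Lemma sgn_upd e n a : sgn e -> (a = 1 \/ a = -1) -> sgn (upd e n a).
Proof. intros H Ha i. unfold upd. destruct (Nat.eqb i n); auto. Qed.

Lemma sgn_one : sgn (fun _ => 1).
Proof. intros i; auto. Qed.

Lemma Ex_mono n F G : (forall e, sgn e -> F e <= G e) -> Ex n F <= Ex n G.
Proof. revert F G. induction n; intros F G H.
  - rewrite !Ex0. apply H, sgn_one.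
  - rewrite !Ex_rec. apply IHn. intros e He.
    assert (F (upd e n 1) <= G (upd e n 1)) by (apply H, sgn_upd; auto).
    assert (F (upd e n (-1)) <= G (upd e n (-1))) by (apply H, sgn_upd; auto). lra. Qed.

Lemma Ex_ext n F G : (forall e, sgn e -> F e = G e) -> Ex n F = Ex n G.
Proof. intros H. apply Rle_antisym; apply Ex_mono; intros e He; rewrite H; auto; lra. Qed.

Lemma Ex_const n a : Ex n (fun _ => a) = a.
Proof. induction n. rewrite Ex0; auto. rewrite Ex_rec. transitivity (Ex n (fun _ => a)); [|auto]. apply Ex_ext; intros; lra. Qed.

Lemma Ex_plus n F G : Ex n (fun e => F e + G e) = Ex n F + Ex n G.
Proof. revert F G. induction n; intros F G. rewrite !Ex0; auto.
  rewrite !Ex_rec. rewrite <- IHn. apply Ex_ext; intros; lra. Qed.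

Lemma Ex_scal n a F : Ex n (fun e => a * F e) = a * Ex n F.
Proof. revert F. induction n; intros F. rewrite !Ex0; auto.
  rewrite !Ex_rec. rewrite <- IHn. apply Ex_ext; intros; lra. Qed.

Lemma exp_mid a b : exp ((a + b) / 2) <= (exp a + exp b) / 2.
Proof. replace a with (a/2 + a/2) at 2 by field. replace b with (b/2 + b/2) at 2 by field.
  rewrite !exp_plus. replace ((a+b)/2) with (a/2 + b/2) by field. rewrite exp_plus.
  assert (0 <= (exp (a/2) - exp (b/2))^2) by apply pow2_ge_0. nra. Qed.

Lemma Ex_jensen n F : exp (Ex n F) <= Ex n (fun e => exp (F e)).
Proof. revert F. induction n; intros F. rewrite !Ex0; lra.
  rewrite !Ex_rec. eapply Rle_trans; [apply IHn|]. apply Ex_mono. intros; apply exp_mid. Qed.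

Lemma upd_lt e n a s : (s < n)%nat -> upd e n a s = e s.
Proof. intros. unfold upd. destruct (Nat.eqb_spec s n); [lia|auto]. Qed.
Lemma upd_eq e n a : upd e n a n = a.
Proof. unfold upd. rewrite Nat.eqb_refl; auto. Qed.

Lemma rsum_upd n e a f : rsum (S n) (fun s => upd e n a s * f s) = rsum n (fun s => e s * f s) + a * f n.
Proof. simpl. rewrite upd_eq. f_equal. apply rsum_ext. intros; rewrite upd_lt; auto. Qed.

Lemma Ex_lin0 n a : Ex n (fun e => rsum n (fun s => e s * a s)) = 0.
Proof. induction n. rewrite Ex0; auto. rewrite Ex_rec. rewrite <- IHn. apply Ex_ext.
  intros e He. rewrite !rsum_upd. lra. Qed.

Lemma sgn_abs e s : sgn e -> Rabs (e s) = 1.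
Proof. intros H. destruct (H s) as [E|E]; rewrite E; [apply Rabs_R1|]. rewrite Rabs_left; lra. Qed.

Lemma sinh_nonneg t : 0 <= t -> 0 <= sinh t.
Proof. intros. unfold sinh. assert (exp (-t) <= exp t).
  { destruct (Req_dec t 0). subst. rewrite Ropp_0; lra. left; apply exp_increasing; lra. } lra. Qed.

Lemma k_nonneg t : 0 <= t -> sinh t <= t * cosh t.
Proof. intros Ht. destruct (Req_dec t 0). subst. unfold sinh, cosh. rewrite Ropp_0. lra.
  assert (D : forall c, 0 <= c <= t -> derivable_pt_lim (fun x => x * cosh x - sinh x) c (c * sinh c)).
  { intros c _. replace (c * sinh c) with ((1 * cosh c + c * sinh c) - cosh c) by ring.
    apply derivable_pt_lim_minus. apply derivable_pt_lim_mult. apply derivable_pt_lim_id.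
    apply derivable_pt_lim_cosh. apply derivable_pt_lim_sinh. }
  destruct (MVT_cor2 (fun x => x * cosh x - sinh x) (fun c => c * sinh c) 0 t ltac:(lra) D) as [c [Hc Hc2]].
  assert (0 <= c * sinh c) by (apply Rmult_le_pos; [lra| apply sinh_nonneg; lra]).
  assert (0 * cosh 0 - sinh 0 = 0) by (unfold sinh; rewrite Ropp_0; lra).
  assert (0 <= c * sinh c * (t - 0)) by (apply Rmult_le_pos; lra). lra. Qed.

Lemma cosh_le_pos t : 0 <= t -> cosh t <= exp (t * t / 2).
Proof. intros Ht. destruct (Req_dec t 0). subst. unfold cosh. rewrite Ropp_0, Rmult_0_l.
  unfold Rdiv; rewrite Rmult_0_l, exp_0. lra.
  set (g := fun x => exp (- (x * x / 2)) * cosh x).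
  set (g' := fun x => exp (- (x * x / 2)) * (sinh x - x * cosh x)).
  assert (D : forall c, 0 <= c <= t -> derivable_pt_lim g c (g' c)).
  { intros c _. unfold g, g'.
    replace (exp (- (c * c / 2)) * (sinh c - c * cosh c)) with
      ((- c * exp (- (c * c / 2))) * cosh c + exp (- (c * c / 2)) * sinh c) by ring.
    apply (derivable_pt_lim_mult (fun x => exp (- (x * x / 2))) cosh); [| apply derivable_pt_lim_cosh].
    replace (- c * exp (- (c * c / 2))) with (exp (- (c * c / 2)) * (- c)) by ring.
    apply (derivable_pt_lim_comp (fun x => - (x * x / 2)) exp); [|apply derivable_pt_lim_exp].
    replace (- c) with (- ((1 * c + c * 1) * / 2 + c * c * 0)) by field.
    apply derivable_pt_lim_opp. unfold Rdiv.
    apply (derivable_pt_lim_mult (fun x => x * x) (fun _ => / 2)).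
    apply (derivable_pt_lim_mult id id); apply derivable_pt_lim_id.
    apply derivable_pt_lim_const. }
  destruct (MVT_cor2 g g' 0 t ltac:(lra) D) as [c [Hc Hc2]].
  assert (g' c <= 0). { unfold g'. assert (sinh c <= c * cosh c) by (apply k_nonneg; lra).
    assert (0 < exp (- (c * c / 2))) by apply exp_pos. nra. }
  assert (g 0 = 1). { unfold g, cosh. rewrite Ropp_0, Rmult_0_l. unfold Rdiv. rewrite Rmult_0_l, Ropp_0, exp_0. lra. }
  assert (g t <= 1). { assert (g' c * (t - 0) <= 0) by (apply Rmult_le_0_r || nra; lra). lra. }
  unfold g in H2. assert (E : exp (- (t * t / 2)) * exp (t * t / 2) = 1) by (rewrite <- exp_plus; replace (- (t * t / 2) + t * t / 2) with 0 by ring; apply exp_0).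
  assert (0 < exp (t * t / 2)) by apply exp_pos.
  assert (exp (- (t * t / 2)) * cosh t * exp (t * t / 2) <= 1 * exp (t * t / 2)) by (apply Rmult_le_compat_r; lra).
  replace (exp (- (t * t / 2)) * cosh t * exp (t * t / 2)) with (cosh t * (exp (- (t * t / 2)) * exp (t * t / 2))) in H4 by ring.
  rewrite E in H4. lra. Qed.

Lemma cosh_le a : (exp a + exp (- a)) / 2 <= exp (a * a / 2).
Proof. destruct (Rle_dec 0 a). apply cosh_le_pos; auto.
  replace (a * a) with (-a * -a) by ring. assert (H := cosh_le_pos (-a) ltac:(lra)). unfold cosh in H.
  rewrite Ropp_involutive in H. lra. Qed.

Definition BD (n : nat) (F : (nat -> R) -> R) (c : R) : Prop :=
  forall s, (s < n)%nat -> forall e e', sgn e -> sgn e' -> (forall i, i <> s -> e i = e' i) ->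
    Rabs (F e - F e') <= c.

Lemma bd_mgf n : forall F c l, 0 <= c -> BD n F c ->
  Ex n (fun e => exp (l * (F e - Ex n F))) <= exp (l * l * INR n * (c * c) / 8).
Proof. induction n; intros F c l Hc HB.
  - rewrite !Ex0. replace (l * (F (fun _ => 1) - F (fun _ => 1))) with 0 by ring.
    simpl. replace (l * l * 0 * (c * c) / 8) with 0 by field. lra.
  - set (G := fun e => (F (upd e n 1) + F (upd e n (-1))) / 2).
    assert (HG : BD n G c).
    { intros s Hs e e' He He' Hee. unfold G.
      assert (A1 : Rabs (F (upd e n 1) - F (upd e' n 1)) <= c).
      { apply (HB s); try lia; try (apply sgn_upd; auto). intros i Hi. unfold upd. destruct (Nat.eqb i n); auto. }
      assert (A2 : Rabs (F (upd e n (-1)) - F (upd e' n (-1))) <= c).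
      { apply (HB s); try lia; try (apply sgn_upd; auto). intros i Hi. unfold upd. destruct (Nat.eqb i n); auto. }
      apply Rabs_le. apply Rabs_le_inv in A1. apply Rabs_le_inv in A2. lra. }
    rewrite (Ex_rec n F). fold G.
    rewrite Ex_rec.
    apply Rle_trans with (Ex n (fun e => exp (l * l * (c * c) / 8) * exp (l * (G e - Ex n G)))).
    + apply Ex_mono. intros e He.
      set (D := (F (upd e n 1) - F (upd e n (-1))) / 2).
      assert (HD : Rabs D <= c / 2).
      { unfold D. assert (Rabs (F (upd e n 1) - F (upd e n (-1))) <= c).
        { apply (HB n); try lia; try (apply sgn_upd; auto). intros i Hi. unfold upd.
          destruct (Nat.eqb_spec i n); [lia|auto]. }
        unfold Rdiv. rewrite Rabs_mult, Rabs_inv, (Rabs_right 2) by lra. lra. }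
      assert (E1 : l * (F (upd e n 1) - Ex n G) = l * (G e - Ex n G) + l * D) by (unfold D; replace (G e) with ((F (upd e n 1) + F (upd e n (-1)))/2) by reflexivity; field).
      assert (E2 : l * (F (upd e n (-1)) - Ex n G) = l * (G e - Ex n G) + - (l * D)) by (unfold D; replace (G e) with ((F (upd e n 1) + F (upd e n (-1)))/2) by reflexivity; field).
      rewrite E1, E2, !exp_plus.
      assert (Hc2 := cosh_le (l * D)).
      assert (exp (l * D * (l * D) / 2) <= exp (l * l * (c * c) / 8)).
      { assert (D * D <= c * c / 4). { apply Rabs_le_inv in HD. nra. }
        assert (l * D * (l * D) / 2 <= l * l * (c * c) / 8).
        { assert (0 <= l * l) by nra. replace (l * D * (l * D) / 2) with (l * l * (D * D) / 2) by field. nra. }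
        destruct (Req_dec (l * D * (l * D) / 2) (l * l * (c * c) / 8)) as [E|E]. rewrite E; lra. left; apply exp_increasing; lra. }
      assert (0 < exp (l * (G e - Ex n G))) by apply exp_pos. nra.
    + rewrite Ex_scal. rewrite S_INR.
      replace (l * l * (INR n + 1) * (c * c) / 8) with (l * l * (c * c) / 8 + l * l * INR n * (c * c) / 8) by field.
      rewrite exp_plus. apply Rmult_le_compat_l. left; apply exp_pos. apply IHn; auto.
Qed.

Lemma rsum_single n f s : (s < n)%nat -> (forall i, (i < n)%nat -> i <> s -> f i = 0) -> rsum n f = f s.
Proof. induction n; intros Hs H; [lia|]. simpl. destruct (Nat.eq_dec s n).
  - subst. rewrite (rsum_ext n f (fun _ => 0)). rewrite rsum_zero; lra. intros; apply H; lia.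
  - rewrite IHn by (auto; lia). rewrite (H n) by lia. lra. Qed.

Lemma BD_lin n a : (forall s, (s < n)%nat -> Rabs (a s) <= 1) ->
  BD n (fun e => rsum n (fun s => e s * a s)) 2.
Proof. intros Ha s Hs e e' He He' Hee.
  replace (rsum n (fun s => e s * a s) - rsum n (fun s => e' s * a s)) with (rsum n (fun i => (e i - e' i) * a i)).
  rewrite (rsum_single n _ s Hs). rewrite Rabs_mult.
  assert (Rabs (e s - e' s) <= 2). { destruct (He s) as [E|E]; destruct (He' s) as [E'|E']; rewrite E, E';
     apply Rabs_le; lra. }
  assert (Rabs (a s) <= 1) by auto. assert (0 <= Rabs (a s)) by apply Rabs_pos.
  assert (0 <= Rabs (e s - e' s)) by apply Rabs_pos. nra.
  intros i Hi Hne. rewrite Hee by auto. ring.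
  rewrite <- (rsum_opp n (fun s => e' s * a s)), <- rsum_plus || idtac.
  unfold Rminus. rewrite <- (rsum_opp n (fun s => e' s * a s)), <- rsum_plus. apply rsum_ext; intros; ring.
Qed.

Lemma subgauss_lin n a l : (forall s, (s < n)%nat -> Rabs (a s) <= 1) ->
  Ex n (fun e => exp (l * rsum n (fun s => e s * a s))) <= exp (l * l * INR n / 2).
Proof. intros Ha. assert (H := bd_mgf n (fun e => rsum n (fun s => e s * a s)) 2 l ltac:(lra) (BD_lin n a Ha)).
  rewrite Ex_lin0 in H. replace (l * l * INR n * (2 * 2) / 8) with (l * l * INR n / 2) in H by field.
  eapply Rle_trans; [|apply H]. apply Ex_mono. intros; rewrite Rminus_0_r; lra. Qed.

Definition SupC {I : Type} (C : I -> Prop) (f : I -> R) : R :=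
  Rsup (fun r => exists th, C th /\ r = f th).

Lemma Rsup_spec E : bound E -> (exists x, E x) -> is_lub E (Rsup E).
Proof. intros Hb Hn. unfold Rsup. destruct (excluded_middle_informative (bound E /\ (exists x, E x))) as [H|H].
  - destruct (completeness E (proj1 H) (proj2 H)) as [m Hm]. simpl. auto.
  - exfalso; auto. Qed.

Lemma SupC_ub {I} (C : I -> Prop) f th : (exists K, forall th, C th -> f th <= K) -> C th -> f th <= SupC C f.
Proof. intros [K HK] Hth. unfold SupC. destruct (Rsup_spec (fun r => exists th, C th /\ r = f th)) as [H1 H2].
  exists K. intros r [t [Ct ->]]. auto. exists (f th), th; auto.
  apply H1. exists th; auto. Qed.

Lemma SupC_lub {I} (C : I -> Prop) f b : (exists th, C th) -> (forall th, C th -> f th <= b) -> SupC C f <= b.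
Proof. intros [t0 Ht0] Hb. unfold SupC. destruct (Rsup_spec (fun r => exists th, C th /\ r = f th)) as [H1 H2].
  exists b. intros r [t [Ct ->]]. auto. exists (f t0), t0; auto.
  apply H2. intros r [t [Ct ->]]. auto. Qed.

Lemma SupC_ext {I} (C : I -> Prop) f g : (forall th, C th -> f th = g th) -> SupC C f = SupC C g.
Proof. intros H. unfold SupC. f_equal. apply functional_extensionality. intros r.
  apply propositional_extensionality. split; intros [t [Ct ->]]; exists t; split; auto. symmetry; auto. Qed.

Lemma SupC_mono {I} (C : I -> Prop) f g : (exists th, C th) -> (exists K, forall th, C th -> g th <= K) ->
  (forall th, C th -> f th <= g th) -> SupC C f <= SupC C g.
Proof. intros Hn Hb H. apply SupC_lub; auto. intros th Ct. eapply Rle_trans; [apply H; auto|]. apply SupC_ub; auto. Qed.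

Lemma exp_le_exp a b : a <= b -> exp a <= exp b.
Proof. intros H. destruct (Req_dec a b). subst; lra. left; apply exp_increasing; lra. Qed.

Lemma exp_sup_pair {I} (C : I -> Prop) X Y mu R : 0 < mu -> (exists th, C th) ->
  (exists K, forall th, C th -> X th <= K) -> (exists K, forall th, C th -> Y th <= K) ->
  (forall t1 t2, C t1 -> C t2 -> exp (mu * X t1) + exp (mu * Y t2) <= R) ->
  exp (mu * SupC C X) + exp (mu * SupC C Y) <= R.
Proof. intros Hmu [t0 Ht0] HX HY H.
  assert (Hx : forall t2, C t2 -> exp (mu * SupC C X) <= R - exp (mu * Y t2)).
  { intros t2 Ct2. assert (Hpos : 0 < R - exp (mu * Y t2)).
    { assert (exp (mu * X t0) + exp (mu * Y t2) <= R) by auto. assert (0 < exp (mu * X t0)) by apply exp_pos. lra. }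
    assert (SupC C X <= ln (R - exp (mu * Y t2)) / mu).
    { apply SupC_lub. exists t0; auto. intros t1 Ct1.
      assert (exp (mu * X t1) <= R - exp (mu * Y t2)). { assert (exp (mu * X t1) + exp (mu * Y t2) <= R) by auto. lra. }
      apply Rmult_le_reg_l with mu; auto. replace (mu * (ln (R - exp (mu * Y t2)) / mu)) with (ln (R - exp (mu * Y t2))) by (field; lra).
      rewrite <- (ln_exp (mu * X t1)). destruct (Req_dec (exp (mu * X t1)) (R - exp (mu * Y t2))) as [E|E]. rewrite E; lra.
      left; apply ln_increasing; [apply exp_pos| lra]. }
    rewrite <- (exp_ln (R - exp (mu * Y t2))) by auto. apply exp_le_exp.
    replace (ln (R - exp (mu * Y t2))) with (mu * (ln (R - exp (mu * Y t2)) / mu)) by (field; lra).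
    apply Rmult_le_compat_l; lra. }
  assert (Hpos : 0 < R - exp (mu * SupC C X)). { assert (H1 := Hx t0 Ht0). assert (0 < exp (mu * Y t0)) by apply exp_pos. lra. }
  assert (SupC C Y <= ln (R - exp (mu * SupC C X)) / mu).
  { apply SupC_lub. exists t0; auto. intros t2 Ct2. assert (H2 := Hx t2 Ct2).
    apply Rmult_le_reg_l with mu; auto. replace (mu * (ln (R - exp (mu * SupC C X)) / mu)) with (ln (R - exp (mu * SupC C X))) by (field; lra).
    rewrite <- (ln_exp (mu * Y t2)). destruct (Req_dec (exp (mu * Y t2)) (R - exp (mu * SupC C X))) as [E|E]. rewrite E; lra.
    left; apply ln_increasing; [apply exp_pos| lra]. }
  assert (exp (mu * SupC C Y) <= R - exp (mu * SupC C X)).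
  { rewrite <- (exp_ln (R - exp (mu * SupC C X))) by auto. apply exp_le_exp.
    replace (ln (R - exp (mu * SupC C X))) with (mu * (ln (R - exp (mu * SupC C X)) / mu)) by (field; lra).
    apply Rmult_le_compat_l; lra. }
  lra. Qed.

Lemma pair_step zeta {I} (C : I -> Prop) (A a : I -> R) mu K : (zeta = 1 \/ zeta = -1) -> 0 < mu ->
  (exists th, C th) -> (forall th, C th -> Rabs (A th) <= K /\ Rabs (a th) <= K) ->
  exp (mu * SupC C (fun th => A th + 1 * (zeta * Rmax (a th) 0))) +
  exp (mu * SupC C (fun th => A th + -1 * (zeta * Rmax (a th) 0))) <=
  exp (mu * SupC C (fun th => A th + 1 * a th)) + exp (mu * SupC C (fun th => A th + -1 * a th)).
Proof. intros Hz Hmu Hn HK.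
  assert (BP : exists K', forall th, C th -> A th + 1 * a th <= K').
  { exists (K + K). intros th Ct. destruct (HK th Ct) as [H1 H2]. apply Rabs_le_inv in H1. apply Rabs_le_inv in H2. lra. }
  assert (BM : exists K', forall th, C th -> A th + -1 * a th <= K').
  { exists (K + K). intros th Ct. destruct (HK th Ct) as [H1 H2]. apply Rabs_le_inv in H1. apply Rabs_le_inv in H2. lra. }
  apply exp_sup_pair; auto.
  { exists (K + K). intros th Ct. destruct (HK th Ct) as [H1 H2]. apply Rabs_le_inv in H1. apply Rabs_le_inv in H2.
    unfold Rmax. destruct (Rle_dec (a th) 0); destruct Hz; subst; lra. }
  { exists (K + K). intros th Ct. destruct (HK th Ct) as [H1 H2]. apply Rabs_le_inv in H1. apply Rabs_le_inv in H2.
    unfold Rmax. destruct (Rle_dec (a th) 0); destruct Hz; subst; lra. }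
  intros t1 t2 C1 C2.
  set (P := exp (mu * SupC C (fun th => A th + 1 * a th))).
  set (M := exp (mu * SupC C (fun th => A th + -1 * a th))).
  assert (P1 : forall th, C th -> exp (mu * (A th + a th)) <= P).
  { intros th Ct. unfold P. apply exp_le_exp. apply Rmult_le_compat_l; [lra|].
    replace (A th + a th) with (A th + 1 * a th) by ring. apply (SupC_ub C (fun th => A th + 1 * a th)); auto. }
  assert (M1 : forall th, C th -> exp (mu * (A th - a th)) <= M).
  { intros th Ct. unfold M. apply exp_le_exp. apply Rmult_le_compat_l; [lra|].
    replace (A th - a th) with (A th + -1 * a th) by ring. apply (SupC_ub C (fun th => A th + -1 * a th)); auto. }
  assert (CV : forall th, 2 * exp (mu * A th) <= exp (mu * (A th + a th)) + exp (mu * (A th - a th))).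
  { intros th. assert (H := exp_mid (mu * (A th + a th)) (mu * (A th - a th))).
    replace ((mu * (A th + a th) + mu * (A th - a th)) / 2) with (mu * A th) in H by field. lra. }
  assert (MO : forall th, 0 <= a th -> exp (mu * (A th - a th)) <= exp (mu * A th) /\ exp (mu * A th) <= exp (mu * (A th + a th))).
  { intros th H. split; apply exp_le_exp; nra. }
  assert (MO' : forall th, a th < 0 -> exp (mu * (A th + a th)) <= exp (mu * A th) /\ exp (mu * A th) <= exp (mu * (A th - a th))).
  { intros th H. split; apply exp_le_exp; nra. }
  assert (RX : forall th, mu * (A th + 1 * (zeta * Rmax (a th) 0)) = 
     if Rle_dec 0 (a th) then (if Req_EM_T zeta 1 then mu * (A th + a th) else mu * (A th - a th)) else mu * A th).
  { intros th. unfold Rmax. destruct (Rle_dec 0 (a th)); destruct (Rle_dec (a th) 0); destruct (Req_EM_T zeta 1); destruct Hz; subst; try lra;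
    try (replace (a th) with 0 by lra); ring. }
  assert (RY : forall th, mu * (A th + -1 * (zeta * Rmax (a th) 0)) = 
     if Rle_dec 0 (a th) then (if Req_EM_T zeta 1 then mu * (A th - a th) else mu * (A th + a th)) else mu * A th).
  { intros th. unfold Rmax. destruct (Rle_dec 0 (a th)); destruct (Rle_dec (a th) 0); destruct (Req_EM_T zeta 1); destruct Hz; subst; try lra;
    try (replace (a th) with 0 by lra); ring. }
  rewrite RX, RY.
  specialize (P1 t1 C1) as P1a. specialize (P1 t2 C2) as P1b. specialize (M1 t1 C1) as M1a. specialize (M1 t2 C2) as M1b.
  specialize (CV t1) as CVa. specialize (CV t2) as CVb.
  destruct (Rle_dec 0 (a t1)) as [h1|h1]; destruct (Rle_dec 0 (a t2)) as [h2|h2];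
  destruct (Req_EM_T zeta 1) as [hz|hz].
  all: try (destruct (MO t1 h1)); try (destruct (MO t2 h2)); try (destruct (MO' t1 ltac:(lra))); try (destruct (MO' t2 ltac:(lra))); lra.
Qed.

Lemma rsum_bound_sgn n e f K : sgn e -> (forall s, (s < n)%nat -> Rabs (f s) <= K) ->
  Rabs (rsum n (fun s => e s * f s)) <= INR n * K.
Proof. intros He Hf. eapply Rle_trans; [apply rsum_abs|]. rewrite <- rsum_const. apply rsum_le.
  intros i Hi. rewrite Rabs_mult, sgn_abs by auto. rewrite Rmult_1_l. auto. Qed.

Lemma Ex_avg_le n X1 X2 Y1 Y2 : Ex n X1 <= Ex n Y1 -> Ex n X2 <= Ex n Y2 ->
  Ex n (fun e => (X1 e + X2 e) / 2) <= Ex n (fun e => (Y1 e + Y2 e) / 2).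
Proof. intros H1 H2. rewrite (Ex_ext n (fun e => (X1 e + X2 e) / 2) (fun e => / 2 * X1 e + / 2 * X2 e)) by (intros; field).
  rewrite (Ex_ext n (fun e => (Y1 e + Y2 e) / 2) (fun e => / 2 * Y1 e + / 2 * Y2 e)) by (intros; field).
  rewrite !Ex_plus, !Ex_scal. lra. Qed.

Lemma contraction zeta mu {I} (C : I -> Prop) (t : I -> nat -> R) :
  (zeta = 1 \/ zeta = -1) -> 0 < mu -> (exists th, C th) ->
  forall n (A : I -> R) K, (forall th, C th -> Rabs (A th) <= K /\ forall s, (s < n)%nat -> Rabs (t th s) <= K) ->
  Ex n (fun e => exp (mu * SupC C (fun th => A th + rsum n (fun s => e s * (zeta * Rmax (t th s) 0))))) <=
  Ex n (fun e => exp (mu * SupC C (fun th => A th + rsum n (fun s => e s * t th s)))).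
Proof. intros Hz Hmu Hn n. induction n; intros A K HK.
  - rewrite !Ex0. simpl. lra.
  - rewrite !Ex_rec.
    assert (HK0 : 0 <= K). { destruct Hn as [t0 Ht0]. destruct (HK t0 Ht0) as [H _]. assert (0 <= Rabs (A t0)) by apply Rabs_pos. lra. }
    apply Rle_trans with (Ex n (fun e =>
      (exp (mu * SupC C (fun th => (A th + 1 * t th n) + rsum n (fun s => e s * (zeta * Rmax (t th s) 0)))) +
       exp (mu * SupC C (fun th => (A th + -1 * t th n) + rsum n (fun s => e s * (zeta * Rmax (t th s) 0))))) / 2)).
    + apply Ex_mono. intros e He.
      rewrite (SupC_ext C (fun th => A th + rsum (S n) (fun s => upd e n 1 s * (zeta * Rmax (t th s) 0)))
         (fun th => (A th + rsum n (fun s => e s * (zeta * Rmax (t th s) 0))) + 1 * (zeta * Rmax (t th n) 0)))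
        by (intros; rewrite rsum_upd; ring).
      rewrite (SupC_ext C (fun th => A th + rsum (S n) (fun s => upd e n (-1) s * (zeta * Rmax (t th s) 0)))
         (fun th => (A th + rsum n (fun s => e s * (zeta * Rmax (t th s) 0))) + -1 * (zeta * Rmax (t th n) 0)))
        by (intros; rewrite rsum_upd; ring).
      rewrite (SupC_ext C (fun th => A th + 1 * t th n + rsum n (fun s => e s * (zeta * Rmax (t th s) 0)))
         (fun th => (A th + rsum n (fun s => e s * (zeta * Rmax (t th s) 0))) + 1 * t th n)) by (intros; ring).
      rewrite (SupC_ext C (fun th => A th + -1 * t th n + rsum n (fun s => e s * (zeta * Rmax (t th s) 0)))
         (fun th => (A th + rsum n (fun s => e s * (zeta * Rmax (t th s) 0))) + -1 * t th n)) by (intros; ring).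
      assert (H := pair_step zeta C (fun th => A th + rsum n (fun s => e s * (zeta * Rmax (t th s) 0))) (fun th => t th n) mu
        (K + INR n * K) Hz Hmu Hn). cbv beta in H.
      assert (Hb : forall th, C th -> Rabs (A th + rsum n (fun s => e s * (zeta * Rmax (t th s) 0))) <= K + INR n * K /\ Rabs (t th n) <= K + INR n * K).
      { intros th Ct. destruct (HK th Ct) as [H1 H2]. assert (0 <= INR n * K) by (apply Rmult_le_pos; auto; apply pos_INR).
        split; [| assert (Rabs (t th n) <= K) by (apply H2; lia); lra].
        eapply Rle_trans; [apply Rabs_triang|]. assert (Rabs (rsum n (fun s => e s * (zeta * Rmax (t th s) 0))) <= INR n * K).
        { apply rsum_bound_sgn; auto. intros s Hs. assert (Rabs (t th s) <= K) by (apply H2; lia).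
          apply Rabs_le_inv in H3. apply Rabs_le. unfold Rmax; destruct (Rle_dec (t th s) 0); destruct Hz; subst; lra. }
        lra. }
      specialize (H Hb). lra.
    + eapply Rle_trans. apply Ex_avg_le.
      * apply (IHn (fun th => A th + 1 * t th n) (K + K)). intros th Ct. destruct (HK th Ct) as [H1 H2].
        split. assert (Rabs (t th n) <= K) by (apply H2; lia). rewrite Rmult_1_l. eapply Rle_trans; [apply Rabs_triang|]. lra.
        intros s Hs. assert (Rabs (t th s) <= K) by (apply H2; lia). lra.
      * apply (IHn (fun th => A th + -1 * t th n) (K + K)). intros th Ct. destruct (HK th Ct) as [H1 H2].
        split. assert (Rabs (t th n) <= K) by (apply H2; lia). eapply Rle_trans; [apply Rabs_triang|].
        rewrite Rabs_mult, (Rabs_left (-1)) by lra. lra.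
        intros s Hs. assert (Rabs (t th s) <= K) by (apply H2; lia). lra.
      * apply Req_le. apply Ex_ext. intros e He. f_equal; f_equal; f_equal; f_equal; apply SupC_ext; intros; rewrite rsum_upd; ring.
Qed.

Lemma exp_max_le mu a b : 0 < mu -> exp (mu * Rmax a b) <= exp (mu * a) + exp (mu * b).
Proof. intros. unfold Rmax. destruct (Rle_dec a b); assert (0 < exp (mu*a)) by apply exp_pos;
  assert (0 < exp (mu * b)) by apply exp_pos; lra. Qed.

Lemma abs_contraction mu {I} (C : I -> Prop) (t : I -> nat -> R) n K :
  0 < mu -> 0 <= K -> (exists th, C th) -> (forall th, C th -> forall s, (s < n)%nat -> Rabs (t th s) <= K) ->
  Ex n (fun e => exp (mu * SupC C (fun th => Rabs (rsum n (fun s => e s * Rmax (t th s) 0))))) <=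
  2 * Ex n (fun e => exp (mu * SupC C (fun th => rsum n (fun s => e s * t th s)))).
Proof. intros Hmu HK0 Hn HK.
  assert (HC : forall zeta, (zeta = 1 \/ zeta = -1) -> 
    Ex n (fun e => exp (mu * SupC C (fun th => 0 + rsum n (fun s => e s * (zeta * Rmax (t th s) 0))))) <=
    Ex n (fun e => exp (mu * SupC C (fun th => rsum n (fun s => e s * t th s))))).
  { intros zeta Hz. eapply Rle_trans. apply (contraction zeta mu C t Hz Hmu Hn n (fun _ => 0) K).
    intros th Ct. split. rewrite Rabs_R0; auto. apply HK; auto.
    apply Req_le. apply Ex_ext. intros e He. f_equal. f_equal. apply SupC_ext. intros; ring. }
  apply Rle_trans with (Ex n (fun e => exp (mu * SupC C (fun th => 0 + rsum n (fun s => e s * (1 * Rmax (t th s) 0))))) +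
     Ex n (fun e => exp (mu * SupC C (fun th => 0 + rsum n (fun s => e s * (-1 * Rmax (t th s) 0)))))).
  2: { assert (H1 := HC 1 (or_introl eq_refl)). assert (H2 := HC (-1) (or_intror eq_refl)). lra. }
  rewrite <- Ex_plus. apply Ex_mono. intros e He.
  assert (Hb : forall th, C th -> Rabs (rsum n (fun s => e s * Rmax (t th s) 0)) <= INR n * K).
  { intros th Ct. apply rsum_bound_sgn; auto. intros s Hs. assert (H := HK th Ct s Hs). apply Rabs_le_inv in H.
    apply Rabs_le. unfold Rmax; destruct (Rle_dec (t th s) 0); lra. }
  eapply Rle_trans; [|apply exp_max_le; auto]. apply exp_le_exp. apply Rmult_le_compat_l; [lra|].
  apply SupC_lub; auto. intros th Ct.
  assert (B1 : exists K', forall th, C th -> 0 + rsum n (fun s => e s * (1 * Rmax (t th s) 0)) <= K').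
  { exists (INR n * K). intros th' Ct'. assert (H := Hb th' Ct'). apply Rabs_le_inv in H.
    rewrite (rsum_ext n _ (fun s => e s * Rmax (t th' s) 0)) by (intros; ring). lra. }
  assert (B2 : exists K', forall th, C th -> 0 + rsum n (fun s => e s * (-1 * Rmax (t th s) 0)) <= K').
  { exists (INR n * K). intros th' Ct'. assert (H := Hb th' Ct'). apply Rabs_le_inv in H.
    rewrite (rsum_ext n _ (fun s => -1 * (e s * Rmax (t th' s) 0))) by (intros; ring). rewrite rsum_scal. lra. }
  assert (U1 := SupC_ub C _ th B1 Ct). assert (U2 := SupC_ub C _ th B2 Ct). cbv beta in U1, U2.
  rewrite (rsum_ext n _ (fun s => e s * Rmax (t th s) 0)) in U1 by (intros; ring).
  rewrite (rsum_ext n _ (fun s => -1 * (e s * Rmax (t th s) 0))) in U2 by (intros; ring). rewrite rsum_scal in U2.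
  unfold Rabs. destruct (Rcase_abs (rsum n (fun s => e s * Rmax (t th s) 0))).
  eapply Rle_trans; [|apply Rmax_r]. lra. eapply Rle_trans; [|apply Rmax_l]. lra.
Qed.

Lemma SupC_diff {I} (C : I -> Prop) X Y c : (exists th, C th) ->
  (exists K, forall th, C th -> X th <= K) -> (exists K, forall th, C th -> Y th <= K) ->
  (forall th, C th -> Rabs (X th - Y th) <= c) -> Rabs (SupC C X - SupC C Y) <= c.
Proof. intros Hn BX BY H. apply Rabs_le. split.
  - assert (SupC C Y <= SupC C X + c). { apply SupC_lub; auto. intros th Ct. assert (h := H th Ct). apply Rabs_le_inv in h.
      assert (X th <= SupC C X) by (apply SupC_ub; auto). lra. } lra.
  - assert (SupC C X <= SupC C Y + c). { apply SupC_lub; auto. intros th Ct. assert (h := H th Ct). apply Rabs_le_inv in h.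
      assert (Y th <= SupC C Y) by (apply SupC_ub; auto). lra. } lra. Qed.

Lemma Ex_rsum n m (F : nat -> (nat -> R) -> R) : Ex n (fun e => rsum m (fun t => F t e)) = rsum m (fun t => Ex n (F t)).
Proof. induction m; simpl. apply Ex_const. rewrite Ex_plus, IHm. auto. Qed.

Lemma exp_rmaxl mu m f : 0 < mu -> (1 <= m)%nat -> (forall t, 0 <= f t) -> exp (mu * rmaxl m f) <= rsum m (fun t => exp (mu * f t)).
Proof. intros Hmu Hm Hf. induction m; [lia|]. destruct m.
  - simpl. rewrite Rmax_right by auto. lra.
  - change (rmaxl (S (S m)) f) with (Rmax (rmaxl (S m) f) (f (S m))). change (rsum (S (S m)) (fun t => exp (mu * f t))) with (rsum (S m) (fun t => exp (mu * f t)) + exp (mu * f (S m))).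
    eapply Rle_trans; [apply exp_max_le; auto|]. assert (H := IHm ltac:(lia)). lra. Qed.

Lemma rmaxl_nonneg m f : 0 <= rmaxl m f.
Proof. induction m; simpl. lra. eapply Rle_trans; [apply IHm|apply Rmax_l]. Qed.

Lemma Ex_nonneg n F : (forall e, sgn e -> 0 <= F e) -> 0 <= Ex n F.
Proof. intros H. rewrite <- (Ex_const n 0). apply Ex_mono; auto. Qed.

Lemma Ex_exp_bound n F mu B : 0 < mu -> Ex n (fun e => exp (mu * F e)) <= B -> Ex n F <= ln B / mu.
Proof. intros Hmu H. assert (J := Ex_jensen n (fun e => mu * F e)). rewrite Ex_scal in J.
  assert (0 < B) by (assert (0 < exp (mu * Ex n F)) by apply exp_pos; lra).
  apply Rmult_le_reg_l with mu; auto. replace (mu * (ln B / mu)) with (ln B) by (field; lra).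
  rewrite <- (ln_exp (mu * Ex n F)). destruct (Req_dec (exp (mu * Ex n F)) B) as [E|E]. rewrite E; lra.
  left; apply ln_increasing; [apply exp_pos|lra]. Qed.

Lemma massart n m (x : nat -> nat -> R) : (1 <= n)%nat -> (1 <= m)%nat ->
  (forall s t, (s < n)%nat -> (t < m)%nat -> Rabs (x s t) <= 1) ->
  Ex n (fun e => rmaxl m (fun t => Rabs (rsum n (fun s => e s * x s t)))) <= sqrt (2 * INR n * ln (2 * INR m)).
Proof. intros Hn Hm Hx.
  assert (HN : 1 <= INR n) by (apply (le_INR 1); lia). assert (HM : 1 <= INR m) by (apply (le_INR 1); lia).
  assert (Hl : 0 < ln (2 * INR m)) by (rewrite <- ln_1; apply ln_increasing; lra).
  set (lam := sqrt (2 * ln (2 * INR m) / INR n)).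
  assert (Hlam : 0 < lam) by (apply sqrt_lt_R0; apply Rdiv_lt_0_compat; lra).
  assert (Hlam2 : lam * lam = 2 * ln (2 * INR m) / INR n) by (apply sqrt_sqrt; left; apply Rdiv_lt_0_compat; lra).
  assert (HB : Ex n (fun e => exp (lam * rmaxl m (fun t => Rabs (rsum n (fun s => e s * x s t))))) <=
    2 * INR m * exp (lam * lam * INR n / 2)).
  { apply Rle_trans with (Ex n (fun e => rsum m (fun t => exp (lam * rsum n (fun s => e s * x s t)) + exp ((- lam) * rsum n (fun s => e s * x s t))))).
    - apply Ex_mono. intros e He. eapply Rle_trans. apply exp_rmaxl; auto. intros; apply Rabs_pos.
      apply rsum_le. intros t Ht. unfold Rabs. destruct (Rcase_abs (rsum n (fun s => e s * x s t))).
      replace (lam * - rsum n (fun s => e s * x s t)) with (- lam * rsum n (fun s => e s * x s t)) by ring.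
      assert (0 < exp (lam * rsum n (fun s => e s * x s t))) by apply exp_pos. lra.
      assert (0 < exp (- lam * rsum n (fun s => e s * x s t))) by apply exp_pos. lra.
    - rewrite Ex_rsum. replace (2 * INR m * exp (lam * lam * INR n / 2)) with (rsum m (fun _ => 2 * exp (lam * lam * INR n / 2)))
        by (rewrite rsum_const; ring).
      apply rsum_le. intros t Ht. rewrite Ex_plus.
      assert (H1 := subgauss_lin n (fun s => x s t) lam (fun s Hs => Hx s t Hs Ht)).
      assert (H2 := subgauss_lin n (fun s => x s t) (- lam) (fun s Hs => Hx s t Hs Ht)).
      replace (- lam * - lam) with (lam * lam) in H2 by ring. lra. }
  eapply Rle_trans. apply (Ex_exp_bound _ _ lam _ Hlam HB).
  rewrite ln_mult by (try apply exp_pos; lra). rewrite ln_exp. rewrite Hlam2.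
  replace ((ln (2 * INR m) + 2 * ln (2 * INR m) / INR n * INR n / 2) / lam) with (2 * ln (2 * INR m) / lam) by (field; lra).
  assert (E : sqrt (2 * INR n * ln (2 * INR m)) = lam * INR n).
  { replace (2 * INR n * ln (2 * INR m)) with ((lam * INR n) * (lam * INR n)).
    apply sqrt_square. nra.
    replace ((lam * INR n) * (lam * INR n)) with ((lam * lam) * (INR n * INR n)) by ring. rewrite Hlam2. field. lra. }
  rewrite E. apply Req_le. apply Rmult_eq_reg_l with lam; [|lra].
  replace (lam * (2 * ln (2 * INR m) / lam)) with (2 * ln (2 * INR m)) by (field; lra).
  replace (lam * (lam * INR n)) with ((lam * lam) * INR n) by ring. rewrite Hlam2. field. lra.
Qed.

Definition lin (dd : nat) (v : nat -> R) (h : nat -> R) : R := v 0%nat + rsum dd (fun r => v (S r) * h r).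

Lemma affine_lin a V u j : affine a V u j = lin a (fun r => V r j) u.
Proof. reflexivity. Qed.

Lemma rpow_pos_le x a : 0 < a -> rpow x a <= rpow x a. Proof. lra. Qed.

Lemma entry_le_col p s1 A r j : 1 <= p -> (r < s1)%nat -> Rabs (A r j) <= col_norm p s1 A j.
Proof. intros Hp Hr. unfold col_norm.
  rewrite <- (rpow_inv (Rabs (A r j)) p) by (try apply Rabs_pos; lra).
  apply rpow_le_base. apply Rlt_le, Rdiv_lt_0_compat; lra. split. apply rpow_nonneg.
  apply (rsum_term s1 (fun i => rpow (Rabs (A i j)) p)); auto. intros; apply rpow_nonneg. Qed.

Lemma col_norm_nonneg p s1 A j : 0 <= col_norm p s1 A j.
Proof. apply rpow_nonneg. Qed.

Lemma rmaxl_term m f j : (j < m)%nat -> f j <= rmaxl m f.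
Proof. induction m; intros Hj; [lia|]. simpl. destruct (Nat.eq_dec j m). subst; apply Rmax_r.
  eapply Rle_trans; [apply IHm; lia| apply Rmax_l]. Qed.

Lemma mat_norm_colbound p q s1 s2 A c : qok q -> 0 < c -> mat_norm p q s1 s2 A = c ->
  colbound q s2 (col_norm p s1 A) c.
Proof. intros Hq Hc H. destruct q as [q'|]; simpl in *.
  - rewrite <- H. rewrite rpow_inv'; [lra | apply rsum_nonneg; intros; apply rpow_nonneg | lra].
  - intros j Hj. rewrite <- H. apply rmaxl_term; auto. Qed.

Lemma colbound_le q d N c j : qok q -> 0 < c -> (forall j, (j < d)%nat -> 0 <= N j) -> colbound q d N c -> (j < d)%nat -> N j <= c.
Proof. intros Hq Hc HN H Hj. destruct q as [q'|]; simpl in *; auto.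
  apply (rpow_le_base_inv _ _ q'); try lra; auto.
  eapply Rle_trans; [|apply H]. apply (rsum_term d (fun j => rpow (N j) q')); auto. intros; apply rpow_nonneg. Qed.

Lemma rsum_shift_le p d v : rsum (S d) (fun r => rpow (Rabs (v r)) p) <= 1 ->
  rpow (Rabs (v 0%nat)) p <= 1 /\ rsum d (fun j => rpow (Rabs (v (S j))) p) <= 1.
Proof. intros H. rewrite rsum_shift in H. assert (0 <= rpow (Rabs (v 0%nat)) p) by apply rpow_nonneg.
  assert (0 <= rsum d (fun j => rpow (Rabs (v (S j))) p)) by (apply rsum_nonneg; intros; apply rpow_nonneg). lra. Qed.

Lemma abs_le1_of_rpow p y : 1 <= p -> rpow (Rabs y) p <= 1 -> Rabs y <= 1.
Proof. intros Hp H. apply (rpow_le1 _ p); auto; try lra. apply Rabs_pos. Qed.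

Lemma relu_scale N y : 0 <= N -> Rmax (N * y) 0 = N * Rmax y 0.
Proof. intros HN. unfold Rmax. destruct (Rle_dec (N*y) 0); destruct (Rle_dec y 0); try nra. Qed.

Lemma lin_scale dd N v h : lin dd (fun r => N * v r) h = N * lin dd v h.
Proof. unfold lin. rewrite (rsum_ext dd _ (fun r => N * (v (S r) * h r))) by (intros; ring). rewrite rsum_scal. ring. Qed.

Lemma lin_abs_bound dd v h B B' : (forall r, (r < S dd)%nat -> Rabs (v r) <= B) -> 0 <= B ->
  (forall r, (r < dd)%nat -> Rabs (h r) <= B') -> 0 <= B' ->
  Rabs (lin dd v h) <= B * (1 + INR dd * B').
Proof. intros Hv HB Hh HB'. unfold lin. eapply Rle_trans; [apply Rabs_triang|].
  assert (Rabs (v 0%nat) <= B) by (apply Hv; lia).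
  assert (Rabs (rsum dd (fun r => v (S r) * h r)) <= INR dd * (B * B')).
  { eapply Rle_trans; [apply rsum_abs|]. rewrite <- rsum_const. apply rsum_le. intros r Hr.
    rewrite Rabs_mult. apply Rmult_le_compat; try apply Rabs_pos. apply Hv; lia. apply Hh; auto. }
  nra. Qed.

Section Net.
Variables (p : R) (q : extR) (k m1 : nat) (dh : nat -> nat) (c : R) (n : nat) (x : nat -> nat -> R).
Hypothesis hp : 1 <= p.
Hypothesis hq : qok q.
Hypothesis hm1 : (1 <= m1)%nat.
Hypothesis hdh : forall i, (1 <= i <= k)%nat -> (1 <= dh i)%nat.
Hypothesis hc : 0 < c.
Hypothesis hx : forall i t, (i < n)%nat -> (t < m1)%nat -> -1 <= x i t <= 1.

Definition d (i : nat) : nat := width k m1 dh i.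
Definition Wcon (i : nat) (W : nat -> nat -> nat -> R) : Prop :=
  forall l, (1 <= l <= i)%nat -> mat_norm p q (S (d (l - 1))) (d l) (W l) = c.
Definition Cls (i : nat) (th : (nat -> nat -> nat -> R) * (nat -> R)) : Prop :=
  Wcon i (fst th) /\ rsum (S (d i)) (fun r => rpow (Rabs (snd th r)) p) <= 1.
Definition gval (i : nat) (th : (nat -> nat -> nat -> R) * (nat -> R)) (xx : nat -> R) : R :=
  lin (d i) (snd th) (hidden k m1 dh (fst th) xx i).
Definition Psi (i : nat) (e : nat -> R) : R :=
  SupC (Cls i) (fun th => rsum n (fun s => e s * gval i th (x s))).
Definition Gam (i : nat) (e : nat -> R) : R :=
  SupC (Cls i) (fun th => Rabs (rsum n (fun s => e s * Rmax (gval i th (x s)) 0))).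

Lemma d_ge1 i : (1 <= d i)%nat.
Proof. unfold d, width. destruct (Nat.eqb_spec i 0). auto. destruct (Nat.leb_spec i k). apply hdh; lia. lia. Qed.

Lemma d_dh i : (1 <= i <= k)%nat -> d i = dh i.
Proof. intros H. unfold d, width. destruct (Nat.eqb_spec i 0). lia. destruct (Nat.leb_spec i k). auto. lia. Qed.

Lemma d0 : d 0 = m1. Proof. reflexivity. Qed.

Lemma Wcon_mono i j W : (j <= i)%nat -> Wcon i W -> Wcon j W.
Proof. intros H HW l Hl. apply HW. lia. Qed.

Lemma entry_bound i W l r j : Wcon i W -> (1 <= l <= i)%nat -> (r < S (d (l - 1)))%nat -> (j < d l)%nat -> Rabs (W l r j) <= c.
Proof. intros HW Hl Hr Hj. eapply Rle_trans. apply (entry_le_col p (S (d (l-1))) (W l) r j hp Hr).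
  apply (colbound_le q (d l) (col_norm p (S (d (l - 1))) (W l)) c j hq hc).
  intros; apply col_norm_nonneg. apply mat_norm_colbound; auto. auto. Qed.

Fixpoint Hb (i : nat) : R := match i with O => 1 | S i' => c * (1 + INR (d i') * Hb i') end.

Lemma Hb_nonneg i : 0 <= Hb i.
Proof. induction i; simpl. lra. apply Rmult_le_pos; [lra|]. assert (0 <= INR (d i)) by apply pos_INR. nra. Qed.

Lemma hidden_bound i W s j : Wcon i W -> (s < n)%nat -> (j < d i)%nat -> Rabs (hidden k m1 dh W (x s) i j) <= Hb i.
Proof. revert j. induction i; intros j HW Hs Hj.
  - simpl. rewrite d0 in Hj. apply Rabs_le. apply hx; auto.
  - simpl hidden. unfold relu. rewrite affine_lin. fold (d i).
    eapply Rle_trans with (Rabs (lin (d i) (fun r => W (S i) r j) (hidden k m1 dh W (x s) i))).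
    { unfold Rmax. destruct (Rle_dec _ 0). rewrite Rabs_R0; apply Rabs_pos. lra. }
    simpl Hb. apply lin_abs_bound. intros r Hr. apply (entry_bound (S i) W (S i)); auto. lia. simpl. rewrite Nat.sub_0_r. auto.
    lra. intros r Hr. apply IHi; auto. apply (Wcon_mono (S i)); auto. apply Hb_nonneg. Qed.

Definition Kg (i : nat) : R := 1 * (1 + INR (d i) * Hb i).

Lemma gval_bound i th s : Cls i th -> (s < n)%nat -> Rabs (gval i th (x s)) <= Kg i.
Proof. intros [HW Hv] Hs. unfold gval, Kg. apply lin_abs_bound.
  intros r Hr. apply (abs_le1_of_rpow p); auto. eapply Rle_trans; [|apply Hv].
  apply (rsum_term (S (d i)) (fun r => rpow (Rabs (snd th r)) p)); auto. intros; apply rpow_nonneg. lra.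
  intros r Hr. apply hidden_bound; auto. apply Hb_nonneg. Qed.

Lemma Kg_nonneg i : 0 <= Kg i.
Proof. unfold Kg. assert (0 <= INR (d i) * Hb i) by (apply Rmult_le_pos; [apply pos_INR| apply Hb_nonneg]). lra. Qed.

Definition W0 : nat -> nat -> nat -> R := fun l r j => if andb (Nat.eqb r 0) (Nat.eqb j 0) then c else 0.

Lemma rmaxl_single m f : (1 <= m)%nat -> 0 <= f 0%nat -> (forall j, (1 <= j)%nat -> f j = 0) -> rmaxl m f = f 0%nat.
Proof. intros Hm H0 H. induction m; [lia|]. destruct m. simpl. rewrite Rmax_right; auto.
  change (rmaxl (S (S m)) f) with (Rmax (rmaxl (S m) f) (f (S m))). rewrite IHm by lia. rewrite (H (S m)) by lia. rewrite Rmax_left; auto. Qed.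

Lemma W0_norm l s1 s2 : (1 <= s1)%nat -> (1 <= s2)%nat -> mat_norm p q s1 s2 (W0 l) = c.
Proof. intros H1 H2.
  assert (HC : forall j, col_norm p s1 (W0 l) j = if Nat.eqb j 0 then c else 0).
  { intros j. unfold col_norm, W0. destruct (Nat.eqb_spec j 0).
    - rewrite (rsum_single s1 _ 0); [ | lia | intros i Hi Hne; destruct (Nat.eqb_spec i 0); [lia|]; simpl; rewrite Rabs_R0, rpow_zero; auto].
      simpl. rewrite Rabs_right by lra. apply rpow_inv; lra.
    - rewrite (rsum_ext s1 _ (fun _ => 0)). rewrite rsum_zero, rpow_zero; auto.
      intros i Hi. destruct (Nat.eqb i 0); destruct (Nat.eqb_spec j 0); try lia; simpl; rewrite Rabs_R0, rpow_zero; auto. }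
  destruct q as [q'|]; simpl in hq |- *.
  - rewrite (rsum_single s2 _ 0).
    + rewrite (HC 0%nat). simpl. apply rpow_inv; lra.
    + lia.
    + intros j Hj Hne. rewrite (HC j). destruct (Nat.eqb_spec j 0); [lia|]. apply rpow_zero.
  - rewrite rmaxl_single.
    + rewrite (HC 0%nat). simpl; auto.
    + auto.
    + rewrite (HC 0%nat); simpl; lra.
    + intros j Hj. rewrite (HC j). destruct (Nat.eqb_spec j 0); [lia|auto]. Qed.

Lemma Cls_ne i : exists th, Cls i th.
Proof. exists (W0, fun _ => 0). split. intros l Hl. apply W0_norm. lia. apply d_ge1.
  cbn [snd]. rewrite (rsum_ext _ _ (fun _ => 0)). rewrite rsum_zero; lra. intros; rewrite Rabs_R0, rpow_zero; auto. Qed.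

Lemma Psi_bnd i e : sgn e -> exists K, forall th, Cls i th -> rsum n (fun s => e s * gval i th (x s)) <= K.
Proof. intros He. exists (INR n * Kg i). intros th Cth.
  assert (H := rsum_bound_sgn n e (fun s => gval i th (x s)) (Kg i) He (fun s Hs => gval_bound i th s Cth Hs)).
  apply Rabs_le_inv in H. lra. Qed.

Lemma Gam_bnd i e : sgn e -> exists K, forall th, Cls i th -> Rabs (rsum n (fun s => e s * Rmax (gval i th (x s)) 0)) <= K.
Proof. intros He. exists (INR n * Kg i). intros th Cth. apply rsum_bound_sgn; auto. intros s Hs.
  assert (H := gval_bound i th s Cth Hs). apply Rabs_le_inv in H. apply Rabs_le.
  assert (0 <= Kg i) by apply Kg_nonneg. unfold Rmax; destruct (Rle_dec _ 0); lra. Qed.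

Lemma Gam_nonneg i e : sgn e -> 0 <= Gam i e.
Proof. intros He. destruct (Cls_ne i) as [th Cth]. unfold Gam.
  eapply Rle_trans; [|apply (SupC_ub (Cls i) _ th (Gam_bnd i e He) Cth)]. apply Rabs_pos. Qed.

Lemma Psi_nonneg i e : sgn e -> 0 <= Psi i e.
Proof. intros He. assert (Cth : Cls i (W0, fun _ => 0)).
  { split. intros l Hl. apply W0_norm. lia. apply d_ge1.
    cbn [snd]. rewrite (rsum_ext _ _ (fun _ => 0)). rewrite rsum_zero; lra. intros; rewrite Rabs_R0, rpow_zero; auto. }
  unfold Psi. eapply Rle_trans; [|apply (SupC_ub (Cls i) _ _ (Psi_bnd i e He) Cth)].
  unfold gval, lin. cbn [snd]. rewrite (rsum_ext n _ (fun _ => 0)). rewrite rsum_zero. lra.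
  intros s _. rewrite (rsum_ext _ _ (fun _ => 0)) by (intros; ring). rewrite rsum_zero. ring. Qed.


Lemma hidden_S W xx i r : hidden k m1 dh W xx (S i) r = Rmax (lin (d i) (fun r' => W (S i) r' r) (hidden k m1 dh W xx i)) 0.
Proof. reflexivity. Qed.

Lemma lin_ext dd v v' h : (forall r, (r < S dd)%nat -> v r = v' r) -> lin dd v h = lin dd v' h.
Proof. intros H. unfold lin. rewrite H by lia. f_equal. apply rsum_ext. intros r Hr. rewrite H by lia. auto. Qed.

Lemma T_bound i W r e : Wcon (S i) W -> (r < d (S i))%nat -> sgn e ->
  Rabs (rsum n (fun s => e s * hidden k m1 dh W (x s) (S i) r)) <= col_norm p (S (d i)) (W (S i)) r * Gam i e.
Proof. intros HW Hr He. set (N := col_norm p (S (d i)) (W (S i)) r).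
  assert (HN : 0 <= N) by apply col_norm_nonneg.
  assert (Hent : forall r', (r' < S (d i))%nat -> Rabs (W (S i) r' r) <= N) by (intros; apply entry_le_col; auto).
  destruct (Req_dec N 0) as [H0|H0].
  - rewrite H0. rewrite Rmult_0_l. rewrite (rsum_ext n _ (fun _ => 0)). rewrite rsum_zero, Rabs_R0; lra.
    intros s Hs. rewrite hidden_S. rewrite (lin_ext _ _ (fun _ => 0)). unfold lin.
    rewrite (rsum_ext _ _ (fun _ => 0)) by (intros; ring). rewrite rsum_zero. unfold Rmax. destruct (Rle_dec _ 0); ring.
    intros r' Hr'. assert (H := Hent r' Hr'). rewrite H0 in H. assert (0 <= Rabs (W (S i) r' r)) by apply Rabs_pos.
    apply Rabs_eq_0 || idtac. destruct (Req_dec (W (S i) r' r) 0); auto. exfalso. assert (0 < Rabs (W (S i) r' r)) by (apply Rabs_pos_lt; auto). lra.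
  - assert (HNp : 0 < N) by lra.
    set (v' := fun r' => W (S i) r' r / N).
    assert (Cv : Cls i (W, v')).
    { split. apply (Wcon_mono (S i)); auto. cbn [snd]. unfold v'.
      assert (HS : rsum (S (d i)) (fun r' => rpow (Rabs (W (S i) r' r)) p) = rpow N p).
      { unfold N, col_norm. rewrite rpow_inv'; auto. apply rsum_nonneg; intros; apply rpow_nonneg. lra. }
      rewrite (rsum_ext _ _ (fun r' => rpow (/ N) p * rpow (Rabs (W (S i) r' r)) p)).
      rewrite rsum_scal, HS, rpow_recip; auto; lra.
      intros r' _. unfold Rdiv. rewrite Rabs_mult, Rabs_inv, (Rabs_right N) by lra. rewrite Rmult_comm, rpow_mult. auto.
      left; apply Rinv_0_lt_compat; auto. apply Rabs_pos. }
    assert (E : rsum n (fun s => e s * hidden k m1 dh W (x s) (S i) r) = N * rsum n (fun s => e s * Rmax (gval i (W, v') (x s)) 0)).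
    { rewrite <- rsum_scal. apply rsum_ext. intros s Hs. rewrite hidden_S.
      rewrite (lin_ext _ _ (fun r' => N * v' r')). rewrite lin_scale, relu_scale by lra. unfold gval. cbn [fst snd]. ring.
      intros r' _. unfold v'. field. lra. }
    rewrite E, Rabs_mult, Rabs_right by lra. apply Rmult_le_compat_l; auto.
    unfold Gam. apply (SupC_ub (Cls i) (fun th => Rabs (rsum n (fun s => e s * Rmax (gval i th (x s)) 0))) (W, v')); auto.
    apply Gam_bnd; auto. Qed.

Definition beta := pos_part (inv_pstar p - inv_ext q).

Lemma layer_step i e : sgn e -> (S i <= k)%nat ->
  Psi (S i) e <= Rabs (rsum n (fun s => e s)) + c * rpow (INR (dh (S i))) beta * Gam i e.
Proof. intros He Hi. unfold Psi. apply SupC_lub. apply Cls_ne.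
  intros [W v] [HW Hv]. cbn [fst snd] in *. unfold gval. cbn [fst snd].
  set (D := d (S i)).
  assert (E : rsum n (fun s => e s * lin D v (hidden k m1 dh W (x s) (S i))) =
     v 0%nat * rsum n (fun s => e s) + rsum D (fun r => v (S r) * rsum n (fun s => e s * hidden k m1 dh W (x s) (S i) r))).
  { unfold lin. rewrite (rsum_ext n _ (fun s => v 0%nat * e s + rsum D (fun r => v (S r) * (e s * hidden k m1 dh W (x s) (S i) r)))).
    rewrite rsum_plus, rsum_scal. f_equal. rewrite rsum_swap. apply rsum_ext. intros r _. apply rsum_scal.
    intros s _. rewrite Rmult_plus_distr_l. f_equal. ring. rewrite <- rsum_scal. apply rsum_ext; intros; ring. }
  rewrite E. destruct (rsum_shift_le p D v Hv) as [Hv0 Hv1].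
  assert (Hv0' : Rabs (v 0%nat) <= 1) by (apply (abs_le1_of_rpow p); auto).
  assert (HG := Gam_nonneg i e He).
  assert (B1 : v 0%nat * rsum n (fun s => e s) <= Rabs (rsum n (fun s => e s))).
  { eapply Rle_trans. apply Rle_abs. rewrite Rabs_mult. assert (0 <= Rabs (rsum n (fun s => e s))) by apply Rabs_pos.
    assert (0 <= Rabs (v 0%nat)) by apply Rabs_pos. nra. }
  assert (B2 : rsum D (fun r => v (S r) * rsum n (fun s => e s * hidden k m1 dh W (x s) (S i) r)) <=
     rsum D (fun r => Rabs (v (S r)) * col_norm p (S (d i)) (W (S i)) r) * Gam i e).
  { rewrite Rmult_comm, <- rsum_scal. apply rsum_le. intros r Hr.
    eapply Rle_trans. apply Rle_abs. rewrite Rabs_mult.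
    assert (T := T_bound i W r e HW Hr He). assert (0 <= Rabs (v (S r))) by apply Rabs_pos.
    apply Rle_trans with (Rabs (v (S r)) * (col_norm p (S (d i)) (W (S i)) r * Gam i e)).
    apply Rmult_le_compat_l; auto. right; ring. }
  assert (B3 : rsum D (fun r => Rabs (v (S r)) * col_norm p (S (d i)) (W (S i)) r) <= c * rpow (INR (dh (S i))) beta).
  { unfold D. rewrite (d_dh (S i)) at 1 by lia. rewrite <- (d_dh (S i)) by lia. fold D. unfold beta.
    replace (rpow (INR (dh (S i))) (pos_part (inv_pstar p - inv_ext q))) with (rpow (INR D) (pos_part (inv_pstar p - inv_ext q)))
      by (unfold D; rewrite d_dh by lia; auto).
    apply holder_beta; auto. apply d_ge1. intros; apply col_norm_nonneg.
    apply (mat_norm_colbound p q (S (d i)) D (W (S i)) c hq hc). unfold D.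
    assert (H := HW (S i) ltac:(lia)). simpl in H. rewrite Nat.sub_0_r in H. auto. }
  assert (rsum D (fun r => Rabs (v (S r)) * col_norm p (S (d i)) (W (S i)) r) * Gam i e <= c * rpow (INR (dh (S i))) beta * Gam i e)
    by (apply Rmult_le_compat_r; auto).
  lra. Qed.


Definition mp : R := rpow (INR m1) (1 - 1/p).
Definition Cin (u : nat -> R) : Prop := rsum m1 (fun t => rpow (Rabs (u t)) p) <= 1.
Definition Zin (e : nat -> R) : R := SupC Cin (fun u => rsum n (fun s => e s * rsum m1 (fun t => u t * x s t))).

Lemma mp_pos : 0 < mp.
Proof. unfold mp. apply rpow_gt0. apply lt_0_INR; lia. Qed.

Lemma inner_bound u s : Cin u -> (s < n)%nat -> Rabs (rsum m1 (fun t => u t * x s t)) <= mp.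
Proof. intros Hu Hs. eapply Rle_trans; [apply rsum_abs|]. eapply Rle_trans; [|apply (powmean p m1 u hp hm1 Hu)].
  apply rsum_le. intros t Ht. rewrite Rabs_mult. assert (H := hx s t Hs Ht).
  assert (Rabs (x s t) <= 1) by (apply Rabs_le; lra). assert (0 <= Rabs (u t)) by apply Rabs_pos. nra. Qed.

Lemma Cin_ne : exists u, Cin u.
Proof. exists (fun _ => 0). unfold Cin. rewrite (rsum_ext _ _ (fun _ => 0)). rewrite rsum_zero; lra.
  intros; rewrite Rabs_R0, rpow_zero; auto. Qed.

Lemma Zin_bnd e : sgn e -> exists K, forall u, Cin u -> rsum n (fun s => e s * rsum m1 (fun t => u t * x s t)) <= K.
Proof. intros He. exists (INR n * mp). intros u Hu.
  assert (H := rsum_bound_sgn n e (fun s => rsum m1 (fun t => u t * x s t)) mp He (fun s Hs => inner_bound u s Hu Hs)).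
  apply Rabs_le_inv in H. lra. Qed.

Lemma Zin_nonneg e : sgn e -> 0 <= Zin e.
Proof. intros He. unfold Zin. eapply Rle_trans; [|apply (SupC_ub Cin _ (fun _ => 0) (Zin_bnd e He))].
  right. rewrite (rsum_ext n _ (fun _ => 0)). rewrite rsum_zero; auto.
  intros s _. rewrite (rsum_ext _ _ (fun _ => 0)) by (intros; ring). rewrite rsum_zero; ring.
  unfold Cin. rewrite (rsum_ext _ _ (fun _ => 0)). rewrite rsum_zero; lra. intros; rewrite Rabs_R0, rpow_zero; auto. Qed.

Lemma Zin_BD : BD n Zin (2 * mp).
Proof. intros s Hs e e' He He' Hee. unfold Zin. apply SupC_diff. apply Cin_ne. apply Zin_bnd; auto. apply Zin_bnd; auto.
  intros u Hu. replace (rsum n (fun s0 => e s0 * rsum m1 (fun t => u t * x s0 t)) - rsum n (fun s0 => e' s0 * rsum m1 (fun t => u t * x s0 t)))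
    with (rsum n (fun i => (e i - e' i) * rsum m1 (fun t => u t * x i t))).
  rewrite (rsum_single n _ s Hs). rewrite Rabs_mult.
  assert (Rabs (e s - e' s) <= 2). { destruct (He s) as [E|E]; destruct (He' s) as [E'|E']; rewrite E, E'; apply Rabs_le; lra. }
  assert (H2 := inner_bound u s Hu Hs). assert (0 <= Rabs (e s - e' s)) by apply Rabs_pos.
  assert (0 <= Rabs (rsum m1 (fun t => u t * x s t))) by apply Rabs_pos. nra.
  intros i Hi Hne. rewrite Hee by auto. ring.
  unfold Rminus. rewrite <- rsum_opp, <- rsum_plus. apply rsum_ext; intros; ring. Qed.

Definition Mx (e : nat -> R) : R := rmaxl m1 (fun t => Rabs (rsum n (fun s => e s * x s t))).

Lemma Zin_le_M e : sgn e -> Zin e <= mp * Mx e.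
Proof. intros He. unfold Zin. apply SupC_lub. apply Cin_ne. intros u Hu.
  replace (rsum n (fun s => e s * rsum m1 (fun t => u t * x s t))) with (rsum m1 (fun t => u t * rsum n (fun s => e s * x s t))).
  2:{ transitivity (rsum m1 (fun t => rsum n (fun s => e s * (u t * x s t)))).
      - apply rsum_ext; intros t _. rewrite <- rsum_scal. apply rsum_ext; intros; ring.
      - rewrite <- rsum_swap. apply rsum_ext; intros s _. rewrite <- rsum_scal. apply rsum_ext; intros; ring. }
  apply Rle_trans with (rsum m1 (fun t => Rabs (u t) * Mx e)).
  - apply rsum_le. intros t Ht. eapply Rle_trans. apply Rle_abs. rewrite Rabs_mult. apply Rmult_le_compat_l. apply Rabs_pos.
    unfold Mx. apply (rmaxl_term m1 (fun t => Rabs (rsum n (fun s => e s * x s t)))); auto.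
  - rewrite (rsum_ext _ _ (fun t => Mx e * Rabs (u t))) by (intros; ring). rewrite rsum_scal.
    rewrite Rmult_comm. apply Rmult_le_compat_r. apply rmaxl_nonneg. apply powmean; auto. Qed.

Lemma EZin_b : (1 <= n)%nat -> Ex n Zin <= mp * sqrt (2 * INR n * ln (2 * INR m1)).
Proof. intros Hn. apply Rle_trans with (Ex n (fun e => mp * Mx e)). apply Ex_mono. apply Zin_le_M.
  rewrite Ex_scal. apply Rmult_le_compat_l. left; apply mp_pos. unfold Mx. apply massart; auto.
  intros s t Hs Ht. apply Rabs_le. apply hx; auto. Qed.

Lemma input_step e : sgn e -> Psi 0 e <= Rabs (rsum n (fun s => e s)) + Zin e.
Proof. intros He. unfold Psi. apply SupC_lub. apply Cls_ne.
  intros [W v] [HW Hv]. cbn [fst snd] in *. unfold gval. cbn [fst snd]. simpl hidden. rewrite d0 in *.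
  unfold lin. rewrite (rsum_ext n _ (fun s => v 0%nat * e s + e s * rsum m1 (fun t => v (S t) * x s t))) by (intros; ring).
  rewrite rsum_plus, rsum_scal. destruct (rsum_shift_le p m1 v Hv) as [Hv0 Hv1].
  assert (Hv0' : Rabs (v 0%nat) <= 1) by (apply (abs_le1_of_rpow p); auto).
  assert (v 0%nat * rsum n (fun s => e s) <= Rabs (rsum n (fun s => e s))).
  { eapply Rle_trans. apply Rle_abs. rewrite Rabs_mult. assert (0 <= Rabs (rsum n (fun s => e s))) by apply Rabs_pos.
    assert (0 <= Rabs (v 0%nat)) by apply Rabs_pos. nra. }
  assert (rsum n (fun s => e s * rsum m1 (fun t => v (S t) * x s t)) <= Zin e).
  { unfold Zin. apply (SupC_ub Cin (fun u => rsum n (fun s => e s * rsum m1 (fun t => u t * x s t))) (fun t => v (S t))).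
    apply Zin_bnd; auto. unfold Cin. auto. }
  change (rsum n e) with (rsum n (fun s => e s)). lra. Qed.

Lemma Rsup_le E b : (forall r, E r -> r <= b) -> 0 <= b -> Rsup E <= b.
Proof. intros H Hb. unfold Rsup. destruct (excluded_middle_informative (bound E /\ (exists x, E x))) as [[H1 H2]|H1].
  - match goal with |- context[proj1_sig ?z] => destruct z as [m [Hm1 Hm2]] end. simpl. apply Hm2. intros r Hr; auto.
  - auto. Qed.

Lemma output_step co f e : 0 < co -> in_NN p q c co k m1 dh f -> sgn e ->
  rsum n (fun s => e s * f (x s)) <= co * Psi k e.
Proof. intros Hco [W [HW [Hout Hf]]] He.
  set (N0 := col_norm p (S (d k)) (W (S k)) 0).
  assert (HN0 : N0 <= co).
  { eapply Rle_trans; [|apply Hout]. unfold mat_norm. fold (d k). destruct q as [q'|]; simpl in hq |- *.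
    - rewrite Rplus_0_l. fold N0. rewrite rpow_inv. lra. apply col_norm_nonneg. lra.
    - fold N0. apply Rmax_r. }
  set (v := fun r => W (S k) r 0%nat / co).
  assert (Cv : Cls k (W, v)).
  { split. intros l Hl. apply HW; auto. cbn [snd]. unfold v.
    assert (HS : rsum (S (d k)) (fun r' => rpow (Rabs (W (S k) r' 0%nat)) p) = rpow N0 p).
    { unfold N0, col_norm. rewrite rpow_inv'; auto. apply rsum_nonneg; intros; apply rpow_nonneg. lra. }
    rewrite (rsum_ext _ _ (fun r' => rpow (/ co) p * rpow (Rabs (W (S k) r' 0%nat)) p)).
    rewrite rsum_scal, HS. rewrite <- (rpow_recip co p) by auto. apply Rmult_le_compat_l. apply rpow_nonneg.
    apply rpow_le_base. lra. split; auto. apply col_norm_nonneg.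
    intros r' _. unfold Rdiv. rewrite Rabs_mult, Rabs_inv, (Rabs_right co) by lra. rewrite Rmult_comm, rpow_mult. auto.
    left; apply Rinv_0_lt_compat; auto. apply Rabs_pos. }
  assert (E : rsum n (fun s => e s * f (x s)) = co * rsum n (fun s => e s * gval k (W, v) (x s))).
  { rewrite <- rsum_scal. apply rsum_ext. intros s _. rewrite Hf. unfold net_out, gval. cbn [fst snd].
    rewrite affine_lin. fold (d k). rewrite (lin_ext _ _ (fun r => co * v r)). rewrite lin_scale. ring.
    intros r _. unfold v. field. lra. }
  rewrite E. apply Rmult_le_compat_l. lra. unfold Psi.
  apply (SupC_ub (Cls k) (fun th => rsum n (fun s => e s * gval k th (x s))) (W, v)); auto. apply Psi_bnd; auto. Qed.


Lemma exp_convex th a b : 0 <= th <= 1 -> exp (th * a + (1 - th) * b) <= th * exp a + (1 - th) * exp b.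
Proof. intros Ht. set (w := th * a + (1 - th) * b).
  assert (Ha : exp w * (1 + (a - w)) <= exp a).
  { replace a with (w + (a - w)) at 2 by ring. rewrite exp_plus. apply Rmult_le_compat_l. left; apply exp_pos. apply exp_ineq1_le. }
  assert (Hb : exp w * (1 + (b - w)) <= exp b).
  { replace b with (w + (b - w)) at 2 by ring. rewrite exp_plus. apply Rmult_le_compat_l. left; apply exp_pos. apply exp_ineq1_le. }
  assert (th * (exp w * (1 + (a - w))) + (1 - th) * (exp w * (1 + (b - w))) = exp w) by (unfold w; ring).
  assert (th * (exp w * (1 + (a - w))) <= th * exp a) by (apply Rmult_le_compat_l; lra).
  assert ((1 - th) * (exp w * (1 + (b - w))) <= (1 - th) * exp b) by (apply Rmult_le_compat_l; lra). lra. Qed.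

Lemma Ex_absS l : 0 <= l -> Ex n (fun e => exp (l * Rabs (rsum n (fun s => e s)))) <= 2 * exp (l * l * INR n / 2).
Proof. intros Hl. apply Rle_trans with (Ex n (fun e => exp (l * rsum n (fun s => e s * (fun _ => 1) s)) + exp ((- l) * rsum n (fun s => e s * (fun _ => 1) s)))).
  - apply Ex_mono. intros e He. rewrite (rsum_ext n (fun s => e s * _) (fun s => e s)) by (intros; ring).
    unfold Rabs. destruct (Rcase_abs (rsum n (fun s => e s))).
    replace (l * - rsum n (fun s => e s)) with (- l * rsum n (fun s => e s)) by ring. assert (0 < exp (l * rsum n (fun s => e s))) by apply exp_pos. lra.
    assert (0 < exp (- l * rsum n (fun s => e s))) by apply exp_pos. lra.
  - rewrite Ex_plus. assert (H1 := subgauss_lin n (fun _ => 1) l). assert (H2 := subgauss_lin n (fun _ => 1) (- l)).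
    assert (h : forall s, (s < n)%nat -> Rabs ((fun _ : nat => 1) s) <= 1) by (intros; rewrite Rabs_R1; lra).
    specialize (H1 h). specialize (H2 h). replace (- l * - l) with (l * l) in H2 by ring. lra. Qed.

Definition Aw (i : nat) : R := c * rpow (INR (dh i)) beta.
Fixpoint Pw (i : nat) : R := match i with O => 1 + mp | S i' => 1 + Aw (S i') * Pw i' end.
Fixpoint cen (i : nat) : R := match i with O => Ex n Zin | S i' => Aw (S i') * cen i' end.

Lemma Aw_nonneg i : 0 <= Aw i.
Proof. unfold Aw. apply Rmult_le_pos. lra. apply rpow_nonneg. Qed.

Lemma Pw_ge1 i : 1 <= Pw i.
Proof. induction i; simpl. assert (H := mp_pos). lra. assert (0 <= Aw (S i)) by apply Aw_nonneg. nra. Qed.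

Lemma chain i : (i <= k)%nat -> forall mu, 0 < mu ->
  Ex n (fun e => exp (mu * (Psi i e - cen i))) <= 2 ^ (S i) * exp (mu * mu * (Pw i * Pw i) * INR n / 2).
Proof. induction i; intros Hi mu Hmu.
  - simpl Pw. simpl cen. set (P := 1 + mp). assert (HP : 1 < P) by (unfold P; assert (H := mp_pos); lra).
    set (th := 1 / P). assert (Hth : 0 <= th <= 1) by (unfold th; split; [apply Rlt_le, Rdiv_lt_0_compat; lra|]; apply Rmult_le_reg_r with P; [lra|]; unfold Rdiv; rewrite Rmult_assoc, Rinv_l; lra).
    assert (Hmp := mp_pos).
    apply Rle_trans with (Ex n (fun e => th * exp ((mu * P) * Rabs (rsum n (fun s => e s))) + (1 - th) * exp ((mu * P / mp) * (Zin e - Ex n Zin)))).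
    + apply Ex_mono. intros e He. eapply Rle_trans; [|apply exp_convex; auto]. apply exp_le_exp.
      assert (H := input_step e He). replace (th * (mu * P * Rabs (rsum n (fun s => e s))) + (1 - th) * (mu * P / mp * (Zin e - Ex n Zin)))
        with (mu * (Rabs (rsum n (fun s => e s)) + (Zin e - Ex n Zin))) by (unfold th, P; field; lra).
      apply Rmult_le_compat_l; lra.
    + rewrite Ex_plus, !Ex_scal. assert (H1 := Ex_absS (mu * P) ltac:(nra)).
      assert (H2 := bd_mgf n Zin (2 * mp) (mu * P / mp) ltac:(lra) Zin_BD).
      replace (mu * P / mp * (mu * P / mp) * INR n * (2 * mp * (2 * mp)) / 8) with (mu * P * (mu * P) * INR n / 2) in H2 by (field; lra).
      replace (mu * mu * (P * P) * INR n / 2) with (mu * P * (mu * P) * INR n / 2) by field.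
      assert (0 < exp (mu * P * (mu * P) * INR n / 2)) by apply exp_pos.
      assert (th * Ex n (fun e => exp (mu * P * Rabs (rsum n (fun s => e s)))) <= th * (2 * exp (mu * P * (mu * P) * INR n / 2))) by (apply Rmult_le_compat_l; lra).
      assert ((1 - th) * Ex n (fun e => exp (mu * P / mp * (Zin e - Ex n Zin))) <= (1 - th) * exp (mu * P * (mu * P) * INR n / 2)) by (apply Rmult_le_compat_l; lra).
      simpl pow. nra.
  - simpl Pw. simpl cen. set (P := 1 + Aw (S i) * Pw i).
    assert (HPi := Pw_ge1 i). assert (HA := Aw_nonneg (S i)).
    assert (HP : 1 <= P) by (unfold P; nra).
    set (th := 1 / P). assert (Hth : 0 <= th <= 1) by (unfold th; split; [apply Rlt_le, Rdiv_lt_0_compat; lra|]; apply Rmult_le_reg_r with P; [lra|]; unfold Rdiv; rewrite Rmult_assoc, Rinv_l; lra).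
    set (mu' := mu * P / Pw i). assert (Hmu' : 0 < mu') by (unfold mu'; apply Rdiv_lt_0_compat; nra).
    apply Rle_trans with (Ex n (fun e => th * exp ((mu * P) * Rabs (rsum n (fun s => e s))) + (1 - th) * exp (mu' * (Gam i e - cen i)))).
    + apply Ex_mono. intros e He. eapply Rle_trans; [|apply exp_convex; auto]. apply exp_le_exp.
      assert (H := layer_step i e He Hi). fold (Aw (S i)) in H.
      replace (th * (mu * P * Rabs (rsum n (fun s => e s))) + (1 - th) * (mu' * (Gam i e - cen i)))
        with (mu * (Rabs (rsum n (fun s => e s)) + Aw (S i) * (Gam i e - cen i))) by (unfold th, mu', P; field; repeat split; nra).
      apply Rmult_le_compat_l; lra.
    + rewrite Ex_plus, !Ex_scal. assert (H1 := Ex_absS (mu * P) ltac:(nra)).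
      assert (H2 : Ex n (fun e => exp (mu' * (Gam i e - cen i))) <= 2 * (2 ^ (S i) * exp (mu' * mu' * (Pw i * Pw i) * INR n / 2))).
      { rewrite (Ex_ext n _ (fun e => exp (- (mu' * cen i)) * exp (mu' * Gam i e))) by (intros; rewrite <- exp_plus; f_equal; ring).
        rewrite Ex_scal. assert (C := abs_contraction mu' (Cls i) (fun th s => gval i th (x s)) n (Kg i) Hmu' (Kg_nonneg i) (Cls_ne i)
            (fun th Cth s Hs => gval_bound i th s Cth Hs)).
        assert (IH := IHi ltac:(lia) mu' Hmu').
        rewrite (Ex_ext n (fun e => exp (mu' * (Psi i e - cen i))) (fun e => exp (- (mu' * cen i)) * exp (mu' * Psi i e))) in IH by (intros; rewrite <- exp_plus; f_equal; ring).
        rewrite Ex_scal in IH. unfold Gam, Psi in *.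
        assert (0 < exp (- (mu' * cen i))) by apply exp_pos.
        assert (exp (- (mu' * cen i)) * Ex n (fun e => exp (mu' * SupC (Cls i) (fun th => Rabs (rsum n (fun s => e s * Rmax (gval i th (x s)) 0))))) <=
                exp (- (mu' * cen i)) * (2 * Ex n (fun e => exp (mu' * SupC (Cls i) (fun th => rsum n (fun s => e s * gval i th (x s)))))))
          by (apply Rmult_le_compat_l; lra). nra. }
      replace (mu' * mu' * (Pw i * Pw i) * INR n / 2) with (mu * mu * (P * P) * INR n / 2) in H2 by (unfold mu'; field; lra).
      assert (0 < exp (mu * mu * (P * P) * INR n / 2)) by apply exp_pos.
      replace (mu * P * (mu * P) * INR n / 2) with (mu * mu * (P * P) * INR n / 2) in H1 by field.
      assert (th * Ex n (fun e => exp (mu * P * Rabs (rsum n (fun s => e s)))) <= th * (2 * exp (mu * mu * (P * P) * INR n / 2))) by (apply Rmult_le_compat_l; lra).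
      assert ((1 - th) * Ex n (fun e => exp (mu' * (Gam i e - cen i))) <= (1 - th) * (2 * (2 ^ (S i) * exp (mu * mu * (P * P) * INR n / 2)))) by (apply Rmult_le_compat_l; lra).
      assert (2 <= 2 ^ S i) by (clear; induction i; simpl in *; lra).
      change (2 ^ S (S i)) with (2 * 2 ^ S i).
      assert (th * (2 * exp (mu * mu * (P * P) * INR n / 2)) <= th * (2 * (2 ^ S i * exp (mu * mu * (P * P) * INR n / 2)))) by (apply Rmult_le_compat_l; nra).
      replace (2 * 2 ^ S i * exp (mu * mu * (P * P) * INR n / 2)) with (th * (2 * (2 ^ S i * exp (mu * mu * (P * P) * INR n / 2))) + (1 - th) * (2 * (2 ^ S i * exp (mu * mu * (P * P) * INR n / 2)))) by ring.
      lra.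
Qed.

Lemma main_bound : (1 <= n)%nat ->
  Ex n (Psi k) <= cen k + sqrt (2 * INR (S k) * ln 2) * Pw k * sqrt (INR n).
Proof. intros Hn. assert (HN : 0 < INR n) by (apply lt_0_INR; lia).
  assert (Hln : 0 < ln 2) by (rewrite <- ln_1; apply ln_increasing; lra).
  assert (HK : 0 < INR (S k)) by (apply lt_0_INR; lia).
  set (nu := sqrt (2 * INR (S k) * ln 2)). assert (Hnu : 0 < nu) by (apply sqrt_lt_R0; nra).
  assert (Hnu2 : nu * nu = 2 * INR (S k) * ln 2) by (apply sqrt_sqrt; nra).
  set (sn := sqrt (INR n)). assert (Hsn : 0 < sn) by (apply sqrt_lt_R0; lra). assert (Hsn2 : sn * sn = INR n) by (apply sqrt_sqrt; lra).
  set (P := Pw k). assert (HP : 1 <= P) by apply Pw_ge1.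
  set (mu := nu / (P * sn)). assert (Hmu : 0 < mu) by (unfold mu; apply Rdiv_lt_0_compat; nra).
  assert (H := chain k (Nat.le_refl k) mu Hmu).
  assert (H2 := Ex_exp_bound n (fun e => Psi k e - cen k) mu _ Hmu H).
  rewrite (Ex_ext n _ (fun e => Psi k e + (- cen k))) in H2 by (intros; ring). rewrite Ex_plus, Ex_const in H2.
  rewrite ln_mult in H2 by (try apply exp_pos; apply pow_lt; lra). rewrite ln_exp, <- Rpower_pow, ln_Rpower in H2 by lra.
  assert (E : (INR (S k) * ln 2 + mu * mu * (Pw k * Pw k) * INR n / 2) / mu = nu * P * sn).
  { fold P. rewrite <- Hsn2. unfold mu. field_simplify; try nra. rewrite <- Hnu2 || idtac.
    replace (INR (S k) * ln 2) with (nu * nu / 2) by lra. field. nra. }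
  change (Ex n (fun e => Psi k e)) with (Ex n (Psi k)) in H2. lra. Qed.

End Net.

Definition Fs (c : R) (D : nat -> R) (i : nat) : R :=
  rsum (S i) (fun j => c ^ (i - j) * rprod (i - j) (fun t => D (S j + t)%nat)).
Definition Cc (c : R) (D : nat -> R) (i : nat) : R := c ^ i * rprod i (fun t => D (S t)).

Lemma Fs_S c D i : Fs c D (S i) = 1 + c * D (S i) * Fs c D i.
Proof. unfold Fs. assert (Hs : forall m f, rsum (S m) f = rsum m f + f m) by reflexivity. rewrite (Hs (S i)). cbv beta.
  replace (S i - S i)%nat with 0%nat by lia. simpl (c ^ 0). simpl (rprod 0 _).
  rewrite <- rsum_scal. rewrite Rplus_comm. f_equal; [ring|]. apply rsum_ext. intros j Hj.
  replace (S i - j)%nat with (S (i - j)) by lia. simpl pow. simpl rprod. replace (j + (i - j))%nat with i by lia. ring. Qed.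

Lemma Cc_S c D i : Cc c D (S i) = c * D (S i) * Cc c D i.
Proof. unfold Cc. simpl. ring. Qed.

Lemma rprod_nonneg m f : (forall t, 0 <= f t) -> 0 <= rprod m f.
Proof. intros H. induction m; simpl. lra. apply Rmult_le_pos; auto. Qed.

Lemma Fs_nonneg c D i : 0 <= c -> (forall t, 0 <= D t) -> 0 <= Fs c D i.
Proof. intros Hc HD. unfold Fs. apply rsum_nonneg. intros. apply Rmult_le_pos. apply pow_le; auto. apply rprod_nonneg; auto. Qed.

Lemma Cc_nonneg c D i : 0 <= c -> (forall t, 0 <= D t) -> 0 <= Cc c D i.
Proof. intros Hc HD. unfold Cc. apply Rmult_le_pos. apply pow_le; auto. apply rprod_nonneg; auto. Qed.

Lemma Pw_eq p q m1 dh c i :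
  Pw p q m1 dh c i = Fs c (fun t => rpow (INR (dh t)) (beta p q)) i + Cc c (fun t => rpow (INR (dh t)) (beta p q)) i * mp p m1.
Proof. induction i. unfold Fs, Cc. simpl. ring.
  simpl Pw. rewrite IHi, Fs_S, Cc_S. unfold Aw. ring. Qed.

Lemma cen_eq p q m1 dh c n x i :
  cen p q m1 dh c n x i = Cc c (fun t => rpow (INR (dh t)) (beta p q)) i * Ex n (Zin p m1 n x).
Proof. induction i. unfold Cc. simpl. ring. simpl cen. rewrite IHi, Cc_S. unfold Aw. ring. Qed.

Lemma rpow_mom y r l : 0 <= y -> 0 < r -> 0 < l -> rpow y r <= rpow (r / l) r * exp (l * y - r).
Proof. intros Hy Hr Hl. set (z := l * y / r). assert (Hz : 0 <= z) by (unfold z; apply Rmult_le_pos; [nra| left; apply Rinv_0_lt_compat; lra]).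
  replace y with (r / l * z) at 1 by (unfold z; field; lra). rewrite rpow_mult; [| apply Rlt_le, Rdiv_lt_0_compat; lra | exact Hz].
  apply Rmult_le_compat_l. apply rpow_nonneg.
  destruct (Req_dec z 0). rewrite H, rpow_zero. left; apply exp_pos.
  rewrite rpow_pos by lra. unfold Rpower. apply exp_le_exp.
  assert (ln z <= z - 1) by (apply ln_le_sub1; lra).
  replace (l * y - r) with (r * (z - 1)) by (unfold z; field; lra). apply Rmult_le_compat_l; lra. Qed.

Lemma Ex_absX n a l : 0 <= l -> (forall s, (s < n)%nat -> Rabs (a s) <= 1) ->
  Ex n (fun e => exp (l * Rabs (rsum n (fun s => e s * a s)))) <= 2 * exp (l * l * INR n / 2).
Proof. intros Hl Ha. apply Rle_trans with (Ex n (fun e => exp (l * rsum n (fun s => e s * a s)) + exp ((- l) * rsum n (fun s => e s * a s)))).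
  - apply Ex_mono. intros e He.
    unfold Rabs. destruct (Rcase_abs (rsum n (fun s => e s * a s))).
    replace (l * - rsum n (fun s => e s * a s)) with (- l * rsum n (fun s => e s * a s)) by ring. assert (0 < exp (l * rsum n (fun s => e s * a s))) by apply exp_pos. lra.
    assert (0 < exp (- l * rsum n (fun s => e s * a s))) by apply exp_pos. lra.
  - rewrite Ex_plus. assert (H1 := subgauss_lin n a l Ha). assert (H2 := subgauss_lin n a (- l) Ha).
    replace (- l * - l) with (l * l) in H2 by ring. lra. Qed.

Lemma moment_bound n a r : (1 <= n)%nat -> 0 < r -> (forall s, (s < n)%nat -> Rabs (a s) <= 1) ->
  Ex n (fun e => rpow (Rabs (rsum n (fun s => e s * a s))) r) <= 2 * rpow (sqrt (r * INR n) * exp (- / 2)) r.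
Proof. intros Hn Hr Ha. assert (HN : 0 < INR n) by (apply lt_0_INR; lia).
  set (l := sqrt (r / INR n)). assert (Hl : 0 < l) by (apply sqrt_lt_R0, Rdiv_lt_0_compat; lra).
  assert (Hl2 : l * l = r / INR n) by (apply sqrt_sqrt; left; apply Rdiv_lt_0_compat; lra).
  apply Rle_trans with (Ex n (fun e => rpow (r / l) r * exp (- r) * exp (l * Rabs (rsum n (fun s => e s * a s))))).
  - apply Ex_mono. intros e He.
    assert (H := rpow_mom (Rabs (rsum n (fun s => e s * a s))) r l (Rabs_pos _) Hr Hl).
    replace (rpow (r / l) r * exp (- r) * exp (l * Rabs (rsum n (fun s => e s * a s)))) with
      (rpow (r / l) r * exp (l * Rabs (rsum n (fun s => e s * a s)) - r)); auto.
    unfold Rminus. rewrite exp_plus. ring.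
  - rewrite Ex_scal. eapply Rle_trans. apply Rmult_le_compat_l. apply Rmult_le_pos; [apply rpow_nonneg| left; apply exp_pos].
    apply Ex_absX; auto; lra.
    rewrite Hl2. replace (r / INR n * INR n / 2) with (r / 2) by (field; lra).
    rewrite rpow_mult by (try (left; apply exp_pos); apply sqrt_pos).
    assert (E1 : r / l = sqrt (r * INR n)).
    { apply Rmult_eq_reg_l with l; [|lra]. replace (l * (r / l)) with r by (field; lra).
      unfold l. rewrite <- sqrt_mult_alt by (left; apply Rdiv_lt_0_compat; lra).
      replace (r / INR n * (r * INR n)) with (r * r) by (field; lra). rewrite sqrt_square; lra. }
    rewrite E1. rewrite (rpow_pos (exp (- / 2))) by apply exp_pos. unfold Rpower at 1. rewrite ln_exp.
    replace (- r) with (r * - / 2 + - (r / 2)) by field. rewrite exp_plus.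
    assert (0 <= rpow (sqrt (r * INR n)) r) by apply rpow_nonneg.
    assert (0 < exp (r * - / 2)) by apply exp_pos. assert (0 < exp (- (r / 2))) by apply exp_pos.
    replace (r / 2) with (- - (r / 2)) at 2 by ring.
    assert (E2 : exp (- (r / 2)) * exp (- - (r / 2)) = 1) by (rewrite <- exp_plus; replace (- (r / 2) + - - (r / 2)) with 0 by ring; apply exp_0).
    right. replace (- / 2 * r) with (r * - / 2) by ring.
    transitivity (rpow (sqrt (r * INR n)) r * exp (r * - / 2) * 2 * (exp (- (r / 2)) * exp (- - (r / 2)))). ring.
    rewrite E2. ring. Qed.

Lemma Zin_holder p m1 n x B e : 1 < p -> 0 < B ->
  Zin p m1 n x e <= B * (1/p + 1 / pstar p * (rsum m1 (fun t => rpow (Rabs (rsum n (fun s => e s * x s t))) (pstar p)) * rpow (/ B) (pstar p))).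
Proof. intros Hp HB. set (r := pstar p). assert (Hr : 0 < r) by (unfold r, pstar; apply Rdiv_lt_0_compat; lra).
  assert (Hpr : 1/p + 1/r = 1) by (unfold r, pstar; field; lra).
  unfold Zin. apply SupC_lub. apply Cin_ne. intros u Hu. unfold Cin in Hu.
  set (X := fun t => rsum n (fun s => e s * x s t)).
  replace (rsum n (fun s => e s * rsum m1 (fun t => u t * x s t))) with (rsum m1 (fun t => u t * X t)).
  2:{ unfold X. transitivity (rsum m1 (fun t => rsum n (fun s => e s * (u t * x s t)))).
      - apply rsum_ext; intros t _. rewrite <- rsum_scal. apply rsum_ext; intros; ring.
      - rewrite <- rsum_swap. apply rsum_ext; intros s _. rewrite <- rsum_scal. apply rsum_ext; intros; ring. }
  apply Rle_trans with (rsum m1 (fun t => B * (1/p * rpow (Rabs (u t)) p + 1/r * (rpow (Rabs (X t)) r * rpow (/ B) r)))).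
  - apply rsum_le. intros t Ht. eapply Rle_trans. apply Rle_abs. rewrite Rabs_mult.
    replace (Rabs (u t) * Rabs (X t)) with (B * (rpow (rpow (Rabs (u t)) p) (1/p) * rpow (rpow (Rabs (X t) * / B) r) (1/r))).
    apply Rmult_le_compat_l; [lra|]. rewrite <- rpow_mult by (try apply Rabs_pos; left; apply Rinv_0_lt_compat; auto).
    apply amgm2; try apply rpow_nonneg; try (apply Rlt_le, Rdiv_lt_0_compat; lra); auto.
    rewrite !rpow_inv; try lra; try apply Rabs_pos. field; lra.
    apply Rmult_le_pos. apply Rabs_pos. left; apply Rinv_0_lt_compat; auto.
  - rewrite rsum_scal. apply Rmult_le_compat_l; [lra|]. rewrite rsum_plus, !rsum_scal.
    assert (1/p * rsum m1 (fun t => rpow (Rabs (u t)) p) <= 1/p * 1) by (apply Rmult_le_compat_l; [apply Rlt_le, Rdiv_lt_0_compat|]; lra).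
    rewrite (rsum_ext m1 (fun t => rpow (Rabs (X t)) r * rpow (/ B) r) (fun t => rpow (/ B) r * rpow (Rabs (X t)) r)) by (intros; ring).
    rewrite rsum_scal. unfold X. rewrite (Rmult_comm (rpow (/ B) r)). lra. Qed.

Lemma exp1_lb : 64 / 27 <= exp 1.
Proof. assert (H := exp_ineq1_le (1/3)).
  assert (E : exp 1 = exp (1/3) * exp (1/3) * exp (1/3)) by (rewrite <- !exp_plus; f_equal; field). rewrite E.
  assert (0 <= 1 + 1/3) by lra. 
  assert ((1 + 1/3) * (1 + 1/3) <= exp (1/3) * exp (1/3)) by (apply Rmult_le_compat; lra).
  assert ((1 + 1/3) * (1 + 1/3) * (1 + 1/3) <= exp (1/3) * exp (1/3) * exp (1/3)) by (apply Rmult_le_compat; nra).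
  lra. Qed.

Lemma num_a r : 2 <= r -> rpow 2 (1/r) * sqrt r * exp (- / 2) <= sqrt (r - 1) + (sqrt 2 - 1).
Proof. intros Hr.
  assert (H2 : rpow 2 (1/r) <= sqrt 2).
  { rewrite rpow_pos by lra. rewrite <- Rpower_sqrt by lra. apply Rle_Rpower. lra.
    apply Rmult_le_reg_r with r; [lra|]. unfold Rdiv. rewrite Rmult_1_l, Rinv_l by lra. lra. }
  set (w := exp (- / 2)). assert (Hw : 0 < w) by apply exp_pos.
  assert (Hw2 : w * w <= 27 / 64).
  { unfold w. rewrite <- exp_plus. replace (- / 2 + - / 2) with (- 1) by field.
    assert (exp (-1) * exp 1 = 1) by (rewrite <- exp_plus; replace (-1 + 1) with 0 by ring; apply exp_0).
    assert (H1 := exp1_lb). assert (0 < exp (-1)) by apply exp_pos. nra. }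
  set (s2 := sqrt 2) in *. assert (Hs2 : s2 * s2 = 2) by (apply sqrt_sqrt; lra). assert (Hs20 : 0 <= s2) by apply sqrt_pos.
  set (A := sqrt r). assert (HA : A * A = r) by (apply sqrt_sqrt; lra). assert (HA0 : 0 <= A) by apply sqrt_pos.
  set (Bq := sqrt (r - 1)). assert (HB : Bq * Bq = r - 1) by (apply sqrt_sqrt; lra). assert (HB0 : 0 <= Bq) by apply sqrt_pos.
  assert (HB1 : 1 <= Bq) by nra.
  assert (Hs2b : 1.41 <= s2 <= 1.415) by nra.
  assert (rpow 2 (1/r) * A * w <= s2 * A * w) by (apply Rmult_le_compat_r; [lra|]; apply Rmult_le_compat_r; lra).
  assert (s2 * A * w <= Bq + (s2 - 1)).
  { assert (0 <= Bq + (s2 - 1)) by lra. assert (0 <= s2 * A * w) by (apply Rmult_le_pos; [apply Rmult_le_pos|]; lra).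
    assert ((s2 * A * w) * (s2 * A * w) <= (Bq + (s2 - 1)) * (Bq + (s2 - 1))).
    { replace ((s2 * A * w) * (s2 * A * w)) with (2 * r * (w * w)) by (rewrite <- Hs2, <- HA; ring).
      assert (2 * r * (w * w) <= 2 * r * (27/64)) by (apply Rmult_le_compat_l; lra). nra. }
    nra. }
  lra. Qed.

Lemma EZin_a p m1 n x : 1 < p <= 2 -> (1 <= m1)%nat -> (1 <= n)%nat ->
  (forall i t, (i < n)%nat -> (t < m1)%nat -> -1 <= x i t <= 1) ->
  Ex n (Zin p m1 n x) <= mp p m1 * sqrt (INR n) * (sqrt (pstar p - 1) + (sqrt 2 - 1)).
Proof. intros Hp Hm Hn Hx. set (r := pstar p).
  assert (Hr2 : 2 <= r). { unfold r, pstar. apply Rmult_le_reg_r with (p - 1); [lra|]. unfold Rdiv. rewrite Rmult_assoc, Rinv_l; lra. }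
  assert (Hpr : 1/p + 1/r = 1) by (unfold r, pstar; field; lra).
  assert (HN : 0 < INR n) by (apply lt_0_INR; lia). assert (HM : 1 <= INR m1) by (apply (le_INR 1); lia).
  set (sg := sqrt (r * INR n) * exp (- / 2)).
  assert (Hsg : 0 < sg) by (apply Rmult_lt_0_compat; [apply sqrt_lt_R0; nra| apply exp_pos]).
  set (B := rpow (2 * INR m1) (1/r) * sg).
  assert (HB : 0 < B) by (apply Rmult_lt_0_compat; [apply rpow_gt0; lra| auto]).
  assert (HBr : rpow B r = 2 * INR m1 * rpow sg r).
  { unfold B. rewrite rpow_mult by (try (apply rpow_nonneg); lra). rewrite rpow_inv'; lra. }
  apply Rle_trans with (B * (1/p + 1/r * (rsum m1 (fun t => 2 * rpow sg r) * rpow (/ B) r))).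
  - apply Rle_trans with (Ex n (fun e => B * (1/p + 1/r * (rsum m1 (fun t => rpow (Rabs (rsum n (fun s => e s * x s t))) r) * rpow (/ B) r)))).
    + apply Ex_mono. intros e He. apply Zin_holder; lra.
    + rewrite Ex_scal. apply Rmult_le_compat_l; [lra|].
      rewrite (Ex_ext n _ (fun e => 1/p + (1/r * rpow (/ B) r) * rsum m1 (fun t => rpow (Rabs (rsum n (fun s => e s * x s t))) r))) by (intros; ring).
      rewrite Ex_plus, Ex_const, Ex_scal, Ex_rsum.
      assert (rsum m1 (fun t => Ex n (fun e => rpow (Rabs (rsum n (fun s => e s * x s t))) r)) <= rsum m1 (fun t => 2 * rpow sg r)).
      { apply rsum_le. intros t Ht. apply moment_bound; auto. lra. intros s Hs. apply Rabs_le. apply Hx; auto. }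
      assert (0 <= 1/r * rpow (/ B) r) by (apply Rmult_le_pos; [apply Rlt_le, Rdiv_lt_0_compat; lra| apply rpow_nonneg]).
      assert (1/r * rpow (/ B) r * rsum m1 (fun t => Ex n (fun e => rpow (Rabs (rsum n (fun s => e s * x s t))) r)) <= 1/r * rpow (/ B) r * rsum m1 (fun t => 2 * rpow sg r)) by (apply Rmult_le_compat_l; auto).
      lra.
  - rewrite rsum_const. replace (INR m1 * (2 * rpow sg r) * rpow (/ B) r) with (rpow (/ B) r * rpow B r) by (rewrite HBr; ring).
    rewrite rpow_recip by auto. rewrite Rmult_1_r, Hpr, Rmult_1_r.
    unfold B, sg. rewrite rpow_mult by lra. rewrite sqrt_mult_alt by lra.
    assert (Emp : rpow (INR m1) (1/r) = mp p m1) by (unfold mp, r, pstar; f_equal; field; lra).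
    rewrite Emp. assert (Hnum := num_a r Hr2). fold r.
    assert (0 < mp p m1) by (apply mp_pos; auto).
    assert (0 < sqrt (INR n)) by (apply sqrt_lt_R0; lra).
    replace (rpow 2 (1 / r) * mp p m1 * (sqrt r * sqrt (INR n) * exp (- / 2))) with
      (mp p m1 * sqrt (INR n) * (rpow 2 (1 / r) * sqrt r * exp (- / 2))) by ring.
    apply Rmult_le_compat_l. apply Rmult_le_pos; lra. auto. Qed.

Theorem proposition2
  (p : R) (q : extR) (k m1 : nat) (dh : nat -> nat) (c co : R)
  (hp : 1 <= p)
  (hq : match q with Some q' => 1 <= q' | None => True end)
  (hm1 : (1 <= m1)%nat)
  (hdh : forall i, (1 <= i <= k)%nat -> (1 <= dh i)%nat)
  (hc : 0 < c) (hco : 0 < co)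
  (n : nat) (hn : (1 <= n)%nat) (x : nat -> nat -> R)
  (hx : forall i t, (i < n)%nat -> (t < m1)%nat -> -1 <= x i t <= 1)
  (hdist : forall i j, (i < n)%nat -> (j < n)%nat -> i <> j ->
           exists t, (t < m1)%nat /\ x i t <> x j t) :
  let beta := pos_part (inv_pstar p - inv_ext q) in
  let L := sqrt (INR (S k) * ln 16) in
  let first := co * (L / sqrt (INR n)) *
      rsum (S k) (fun j => let i := S j in
         c ^ (S k - i) * rprod (S k - i) (fun t => rpow (INR (dh (i + t)%nat)) beta)) in
  let pref := co * c ^ k / sqrt (INR n) *
      rprod k (fun t => rpow (INR (dh (S t))) beta) *
      rpow (INR m1) (inv_pstar p) in
  let R := emp_rademacher (in_NN p q c co k m1 dh) n x in
  (1 < p <= 2 ->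
     R <= first + pref *
       (Rmin (sqrt (pstar p - 1)) (sqrt (2 * ln (2 * INR m1))) + L)) /\
  (p = 1 \/ 2 < p ->
     R <= first + pref * (sqrt (2 * ln (2 * INR m1)) + L)).
Proof.
  intros beta0 L first pref R.
  assert (hq' : qok q) by (unfold qok; auto).
  set (D := fun t => rpow (INR (dh t)) (beta p q)).
  assert (HD : forall t, 0 <= D t) by (intros; apply rpow_nonneg).
  set (a := Cc c D k). set (b := Fs c D k). set (m := mp p m1).
  assert (Ha : 0 <= a) by (apply Cc_nonneg; auto; lra). assert (Hb : 0 <= b) by (apply Fs_nonneg; auto; lra).
  assert (Hm : 0 < m) by apply mp_pos, hm1.
  assert (HN : 0 < INR n) by (apply lt_0_INR; lia).
  set (sn := sqrt (INR n)). assert (Hsn : 0 < sn) by (apply sqrt_lt_R0; lra). assert (Hsn2 : sn * sn = INR n) by (apply sqrt_sqrt; lra).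
  assert (Hln2 : / 2 < ln 2) by apply ln_lt_2.
  assert (HK : 1 <= INR (S k)) by (apply (le_INR 1); lia).
  set (nu := sqrt (2 * INR (S k) * ln 2)).
  assert (Hnu2 : nu * nu = 2 * INR (S k) * ln 2) by (apply sqrt_sqrt; nra).
  assert (Hnu0 : 0 <= nu) by apply sqrt_pos.
  assert (Hnu1 : 1 <= nu). { apply Rsqr_incr_0_var. unfold Rsqr. rewrite Hnu2. nra. lra. }
  assert (HL : L = sqrt 2 * nu).
  { unfold L, nu. rewrite <- sqrt_mult_alt by lra. f_equal.
    replace 16 with (2 ^ 4) by (simpl; lra). rewrite ln_pow by lra. simpl INR. ring. }
  assert (Hs2 : 1 < sqrt 2). { rewrite <- sqrt_1. apply sqrt_lt_1_alt. lra. }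
  assert (HnuL : nu <= L) by (rewrite HL; nra).
  assert (HLnu : sqrt 2 - 1 <= L - nu) by (rewrite HL; nra).
  assert (HR : R <= / INR n * co * Ex n (Psi p q k m1 dh c n x k)).
  { unfold R, emp_rademacher. change (/ 2 ^ n * lsum (map (fun eps => Rsup (fun r => exists f, in_NN p q c co k m1 dh f /\
        r = / INR n * rsum n (fun i => eps i * f (x i)))) (sign_vectors n))) with
      (Ex n (fun eps => Rsup (fun r => exists f, in_NN p q c co k m1 dh f /\ r = / INR n * rsum n (fun i => eps i * f (x i))))).
    rewrite Rmult_assoc, <- Ex_scal, <- Ex_scal. apply Ex_mono. intros e He.
    assert (HP0 := Psi_nonneg p q k m1 dh c n x hp hq' hm1 hdh hc hx k e He).
    apply Rsup_le. intros r [f [Hf ->]]. apply Rmult_le_compat_l. left; apply Rinv_0_lt_compat; auto.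
    apply output_step; auto. apply Rmult_le_pos. left; apply Rinv_0_lt_compat; auto. nra. }
  assert (HM := main_bound p q k m1 dh c n x hp hq' hm1 hdh hc hx hn).
  rewrite Pw_eq, cen_eq in HM. fold D in HM. fold a b m in HM. fold nu sn in HM.
  set (Z := Ex n (Zin p m1 n x)) in HM.
  set (E := Ex n (Psi p q k m1 dh c n x k)) in HM, HR.
  assert (Hfirst : first = co * (L / sn) * b) by reflexivity.
  assert (Hr : rprod k (fun t => rpow (INR (dh (S t))) beta0) = rprod k (fun t => D (S t))) by reflexivity.
  assert (Hm' : rpow (INR m1) (inv_pstar p) = m) by reflexivity.
  assert (Hpref : pref = co * a * m / sn) by (unfold pref; rewrite Hr, Hm'; unfold a, Cc; fold sn; field; lra).
  assert (Fin : forall K, 0 <= K -> Z <= m * sn * (K + (L - nu)) -> R <= first + pref * (K + L)).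
  { intros K HK0 HZ. rewrite Hfirst, Hpref.
    assert (E <= sn * (L * b + a * m * (K + L))).
    { assert (a * Z <= a * (m * sn * (K + (L - nu)))) by (apply Rmult_le_compat_l; auto).
      assert (nu * b <= L * b) by (apply Rmult_le_compat_r; auto).
      assert (0 <= a * m) by nra. nra. }
    apply Rle_trans with (/ INR n * co * E); auto.
    rewrite <- Hsn2. apply Rle_trans with (co / sn * (L * b + a * m * (K + L))).
    - replace (/ (sn * sn) * co * E) with (co / sn * (E / sn)) by (field; lra).
      apply Rmult_le_compat_l. apply Rlt_le, Rdiv_lt_0_compat; lra.
      apply Rmult_le_reg_r with sn; auto. replace (E / sn * sn) with E by (field; lra). lra.
    - right. field. lra. }
  assert (Hu0 : 0 <= sqrt (2 * ln (2 * INR m1))) by apply sqrt_pos.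
  assert (Hb_case : R <= first + pref * (sqrt (2 * ln (2 * INR m1)) + L)).
  { apply Fin; auto. assert (HZ := EZin_b p m1 n x hp hm1 hx hn). fold Z m in HZ.
    replace (sqrt (2 * INR n * ln (2 * INR m1))) with (sn * sqrt (2 * ln (2 * INR m1))) in HZ.
    assert (0 <= L - nu) by lra. assert (0 <= m * sn * (L - nu)) by (apply Rmult_le_pos; [apply Rmult_le_pos|]; lra). lra.
    unfold sn. rewrite <- sqrt_mult_alt by lra. f_equal. ring. }
  split.
  - intros Hp12. unfold Rmin. destruct (Rle_dec (sqrt (pstar p - 1)) (sqrt (2 * ln (2 * INR m1)))); auto.
    apply Fin. apply sqrt_pos. assert (HZ := EZin_a p m1 n x Hp12 hm1 hn hx). fold Z m sn in HZ.
    assert (m * sn * (sqrt (pstar p - 1) + (sqrt 2 - 1)) <= m * sn * (sqrt (pstar p - 1) + (L - nu))).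
    { apply Rmult_le_compat_l; nra. } lra.
  - intros _. auto.
Qed.
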